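(* Let $n\neq1$, $p\neq0$, $b\neq0$ (so equation (A) is multi-dimensional, hyperbolic and quasilinear). Consider the vector fields $\hat X_1=\partial_t$; $\hat X_2=t\partial_t+r\partial_r$; $\hat X_3=\tfrac12pbr\,\partial_r+(bu+pc)\partial_u$; $\hat X_4=(a+b+(1-p)c)r^{3-n}\partial_r+(2-n)r^{2-n}\big((b+(1-p)c)u+pc\big)\partial_u$; $\hat X_5=\tfrac12pbr\ln r\,\partial_r+(1+\ln r)(bu+pc)\partial_u$; $\hat X_6=t^2\partial_t+tu\partial_u$. Then the Lie algebra of point symmetries of (A) is spanned by $\hat X_1,\hat X_2$ together with: $\hat X_3$ iff $c(p-1)=0$; $\hat X_4$ iff $c(p-1)=0$, $n\neq2$ and $(a+b+(1-p)c)(n-3)=bp(n/2-1)$; $\hat X_5$ iff $c(p-1)=0$, $n=2$ and $a=-b$; $\hat X_6$ iff $c=0$ and $p=-4$. In particular, if $c\neq0$ and $p\neq1$ the algebra is 2-dimensional, spanned by $\hat X_1,\hat X_2$. Whenever the relevant generators are present, their commutators are $[\hat X_1,\hat X_2]=\hat X_1$, $[\hat X_1,\hat X_3]=[\hat X_2,\hat X_3]=0$, $[\hat X_1,\hat X_4]=0$, $[\hat X_2,\hat X_4]=(2-n)\hat X_4$, $[\hat X_3,\hat X_4]=p(1-n/2)b\,\hat X_4$, $[\hat X_1,\hat X_5]=0$, $[\hat X_2,\hat X_5]=\hat X_3$, $[\hat X_3,\hat X_5]=\tfrac{pb}{2}\hat X_3$, $[\hat X_1,\hat X_6]=2\hat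 X_2+\tfrac1b\hat X_3$, $[\hat X_2,\hat X_6]=\hat X_6$, $[\hat X_3,\hat X_6]=[\hat X_4,\hat X_6]=[\hat X_5,\hat X_6]=0$.
   Context: Equation (A) is $u_{tt}=(c+bu^{p})\big(u_{rr}+\frac{n-1}{r}u_{r}\big)+au^{p-1}u_{r}^{2}$ for $u(t,r)$, $r>0$, $u>0$, with real constants $a,b,c$, $p\neq0$ and real $n$. A point symmetry is a vector field $\hat X=\tau(t,r,u)\partial_t+\xi(t,r,u)\partial_r+\eta(t,r,u)\partial_u$ whose prolongation leaves the equation invariant; equivalently, $P=\eta-\tau u_t-\xi u_r$ satisfies the linearized (Fréchet derivative) equation of (A) on all solutions. Point symmetries form a Lie algebra under the vector field commutator $[\hat X,\hat Y]=\hat X\hat Y-\hat Y\hat X$. *)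

(* Defs.v *)
From Stdlib Require Import Reals List.
Import ListNotations.
Open Scope R_scope.

(* Functions of (t, r, u); the relevant domain is t in R, r > 0, u > 0. *)
Definition fn3 := R -> R -> R -> R.

(* A vector field  tau d_t + xi d_r + eta d_u. *)
Record VF := mkVF { vt : fn3; vr : fn3; vu : fn3 }.

Definition comp (X : VF) (k : nat) : fn3 :=
  match k with O => vt X | S O => vr X | _ => vu X end.

Definition pd (i : nat) (F G : fn3) : Prop :=
  forall t r u, 0 < r -> 0 < u ->
    match i with
    | O => derivable_pt_lim (fun s => F s r u) t (G t r u)
    | S O => derivable_pt_lim (fun s => F t s u) r (G t r u)
    | _ => derivable_pt_lim (fun s => F t r s) u (G t r u)
    end.

(* D is a full family of iterated partial derivatives of F (hence F is C^infty
   on the domain): D [] = F and D (i :: l) = d_i (D l). *)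
Definition derivs_of (F : fn3) (D : list nat -> fn3) : Prop :=
  D nil = F /\ forall (l : list nat) (i : nat), (i < 3)%nat -> pd i (D l) (D (i :: l)).

(* pr^(2) X applied to
   Delta = u_tt - (c + b u^p)(u_rr + (n-1)/r u_r) - a u^(p-1) u_r^2,
   evaluated on the solution manifold Delta = 0 (u_tt eliminated), at the jet
   point (t, r, u, u_t, u_r, u_tr, u_rr).  Standard prolongation formulas:
   eta^J,i = D_i eta^J - sum_k u_{J,k} D_i xi^k. *)
Definition prolong_residual (a b c p n : R) (Dt Dx De : list nat -> fn3)
    (t r u ut ur utr urr : R) : R :=
  let utt := (c + b * Rpower u p) * (urr + (n - 1) / r * ur)
             + a * Rpower u (p - 1) * ur ^ 2 in
  let g (D : list nat -> fn3) (l : list nat) := D l t r u in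
  let DT D := g D [0%nat] + g D [2%nat] * ut in
  let DR D := g D [1%nat] + g D [2%nat] * ur in
  let DT2 D := g D [0%nat; 0%nat] + 2 * g D [2%nat; 0%nat] * ut
               + g D [2%nat; 2%nat] * ut ^ 2 + g D [2%nat] * utt in
  let DR2 D := g D [1%nat; 1%nat] + 2 * g D [2%nat; 1%nat] * ur
               + g D [2%nat; 2%nat] * ur ^ 2 + g D [2%nat] * urr in
  let eta_t := DT De - ut * DT Dt - ur * DT Dx in
  let eta_r := DR De - ut * DR Dt - ur * DR Dx in
  let eta_tt := DT2 De - ut * DT2 Dt - ur * DT2 Dx
                - 2 * utt * DT Dt - 2 * utr * DT Dx in
  let eta_rr := DR2 De - ut * DR2 Dt - ur * DR2 Dx
                - 2 * utr * DR Dt - 2 * urr * DR Dx in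
  let eta := g De nil in
  let xi := g Dx nil in
  eta_tt
  - b * p * Rpower u (p - 1) * eta * (urr + (n - 1) / r * ur)
  - (c + b * Rpower u p) * (eta_rr + (n - 1) / r * eta_r - (n - 1) / (r ^ 2) * xi * ur)
  - a * (p - 1) * Rpower u (p - 2) * eta * ur ^ 2
  - 2 * a * Rpower u (p - 1) * ur * eta_r.

Definition point_symmetry (a b c p n : R) (X : VF) : Prop :=
  exists Dt Dx De : list nat -> fn3,
    derivs_of (vt X) Dt /\ derivs_of (vr X) Dx /\ derivs_of (vu X) De /\
    forall t r u ut ur utr urr, 0 < r -> 0 < u ->
      prolong_residual a b c p n Dt Dx De t r u ut ur utr urr = 0.

Definition vf_zero : VF := mkVF (fun _ _ _ => 0) (fun _ _ _ => 0) (fun _ _ _ => 0).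
Definition vf_add (X Y : VF) : VF :=
  mkVF (fun t r u => vt X t r u + vt Y t r u)
       (fun t r u => vr X t r u + vr Y t r u)
       (fun t r u => vu X t r u + vu Y t r u).
Definition vf_scale (k : R) (X : VF) : VF :=
  mkVF (fun t r u => k * vt X t r u) (fun t r u => k * vr X t r u)
       (fun t r u => k * vu X t r u).
Definition vf_eq (X Y : VF) : Prop :=
  forall t r u, 0 < r -> 0 < u ->
    vt X t r u = vt Y t r u /\ vr X t r u = vr Y t r u /\ vu X t r u = vu Y t r u.

Definition is_bracket (X Y Z : VF) : Prop :=
  exists DX DY : nat -> nat -> fn3,
    (forall k j, (k < 3)%nat -> (j < 3)%nat ->
       pd j (comp X k) (DX k j) /\ pd j (comp Y k) (DY k j)) /\
    forall t r u, 0 < r -> 0 < u -> forall k, (k < 3)%nat ->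
      comp Z k t r u =
        (comp X 0 t r u * DY k 0%nat t r u - comp Y 0 t r u * DX k 0%nat t r u)
      + (comp X 1 t r u * DY k 1%nat t r u - comp Y 1 t r u * DX k 1%nat t r u)
      + (comp X 2 t r u * DY k 2%nat t r u - comp Y 2 t r u * DX k 2%nat t r u).

Definition X1 : VF := mkVF (fun _ _ _ => 1) (fun _ _ _ => 0) (fun _ _ _ => 0).
Definition X2 : VF := mkVF (fun t _ _ => t) (fun _ r _ => r) (fun _ _ _ => 0).
Definition X3 (b c p : R) : VF :=
  mkVF (fun _ _ _ => 0) (fun _ r _ => / 2 * p * b * r) (fun _ _ u => b * u + p * c).
Definition X4 (a b c p n : R) : VF :=
  mkVF (fun _ _ _ => 0)
       (fun _ r _ => (a + b + (1 - p) * c) * Rpower r (3 - n))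
       (fun _ r u => (2 - n) * Rpower r (2 - n) * ((b + (1 - p) * c) * u + p * c)).
Definition X5 (b c p : R) : VF :=
  mkVF (fun _ _ _ => 0) (fun _ r _ => / 2 * p * b * r * ln r)
       (fun _ r u => (1 + ln r) * (b * u + p * c)).
Definition X6 : VF := mkVF (fun t _ _ => t ^ 2) (fun _ _ _ => 0) (fun t _ u => t * u).

Definition cond3 (c p : R) : Prop := c * (p - 1) = 0.
Definition cond4 (a b c p n : R) : Prop :=
  c * (p - 1) = 0 /\ n <> 2 /\ (a + b + (1 - p) * c) * (n - 3) = b * p * (n / 2 - 1).
Definition cond5 (a b c p n : R) : Prop := c * (p - 1) = 0 /\ n = 2 /\ a = - b.
Definition cond6 (c p : R) : Prop := c = 0 /\ p = -4.

(* Main.v *)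
Require Import Defs.
From Stdlib Require Import Reals List Lra Lia Classical.
Import ListNotations.
Open Scope R_scope.

Fixpoint cnt (i : nat) (l : list nat) : nat :=
  match l with nil => O | j :: l' => if Nat.eqb i j then S (cnt i l') else cnt i l' end.

Definition smooth (dom : R -> Prop) (f : nat -> R -> R) : Prop :=
  forall k x, dom x -> derivable_pt_lim (f k) x (f (S k) x).

Definition prodD (f g h : nat -> R -> R) : list nat -> fn3 :=
  fun l t r u => f (cnt 0 l) t * g (cnt 1 l) r * h (cnt 2 l) u.

Definition fam_ok (D : list nat -> fn3) : Prop :=
  forall l i, (i < 3)%nat -> pd i (D l) (D (i :: l)).

Lemma prodD_ok f g h : smooth (fun _ => True) f -> smooth (fun x => 0 < x) g ->
  smooth (fun x => 0 < x) h -> fam_ok (prodD f g h).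
Proof.
  intros Hf Hg Hh l i Hi t r u Hr Hu.
  destruct i as [|[|[|i]]]; try lia; unfold prodD; simpl.
  - apply derivable_pt_lim_ext with (f := fun s => (g (cnt 1 l) r * h (cnt 2 l) u) * f (cnt 0 l) s).
    { intros; ring. }
    replace (f (S (cnt 0 l)) t * g (cnt 1 l) r * h (cnt 2 l) u) with
      ((g (cnt 1 l) r * h (cnt 2 l) u) * f (S (cnt 0 l)) t) by ring.
    apply derivable_pt_lim_scal. apply Hf; auto.
  - apply derivable_pt_lim_ext with (f := fun s => (f (cnt 0 l) t * h (cnt 2 l) u) * g (cnt 1 l) s).
    { intros; ring. }
    replace (f (cnt 0 l) t * g (S (cnt 1 l)) r * h (cnt 2 l) u) with
      ((f (cnt 0 l) t * h (cnt 2 l) u) * g (S (cnt 1 l)) r) by ring.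
    apply derivable_pt_lim_scal. apply Hg; auto.
  - apply derivable_pt_lim_ext with (f := fun s => (f (cnt 0 l) t * g (cnt 1 l) r) * h (cnt 2 l) s).
    { intros; ring. }
    apply derivable_pt_lim_scal. apply Hh; auto.
Qed.

Definition addD (D1 D2 : list nat -> fn3) : list nat -> fn3 :=
  fun l t r u => D1 l t r u + D2 l t r u.
Definition sclD (k : R) (D : list nat -> fn3) : list nat -> fn3 :=
  fun l t r u => k * D l t r u.

Lemma addD_ok D1 D2 : fam_ok D1 -> fam_ok D2 -> fam_ok (addD D1 D2).
Proof.
  intros H1 H2 l i Hi t r u Hr Hu. specialize (H1 l i Hi t r u Hr Hu).
  specialize (H2 l i Hi t r u Hr Hu). unfold addD.
  destruct i as [|[|i]]; apply derivable_pt_lim_plus; auto.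
Qed.

Lemma sclD_ok k D : fam_ok D -> fam_ok (sclD k D).
Proof.
  intros H1 l i Hi t r u Hr Hu. specialize (H1 l i Hi t r u Hr Hu). unfold sclD.
  destruct i as [|[|i]]; apply derivable_pt_lim_scal; auto.
Qed.


Lemma dpl_plus f g x l1 l2 l : derivable_pt_lim f x l1 -> derivable_pt_lim g x l2 ->
  l = l1 + l2 -> derivable_pt_lim (fun y => f y + g y) x l.
Proof. intros H1 H2 ->. apply (derivable_pt_lim_plus f g x l1 l2 H1 H2). Qed.
Lemma dpl_minus f g x l1 l2 l : derivable_pt_lim f x l1 -> derivable_pt_lim g x l2 ->
  l = l1 - l2 -> derivable_pt_lim (fun y => f y - g y) x l.
Proof. intros H1 H2 ->. apply (derivable_pt_lim_minus f g x l1 l2 H1 H2). Qed.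
Lemma dpl_mult f g x l1 l2 l : derivable_pt_lim f x l1 -> derivable_pt_lim g x l2 ->
  l = l1 * g x + f x * l2 -> derivable_pt_lim (fun y => f y * g y) x l.
Proof. intros H1 H2 ->. apply (derivable_pt_lim_mult f g x l1 l2 H1 H2). Qed.
Lemma dpl_scal f a x l1 l : derivable_pt_lim f x l1 -> l = a * l1 ->
  derivable_pt_lim (fun y => a * f y) x l.
Proof. intros H1 ->. apply (derivable_pt_lim_scal f a x l1 H1). Qed.
Lemma dpl_const a x l : l = 0 -> derivable_pt_lim (fun _ => a) x l.
Proof. intros ->. apply derivable_pt_lim_const. Qed.
Lemma dpl_id x l : l = 1 -> derivable_pt_lim (fun y => y) x l.
Proof. intros ->. apply derivable_pt_lim_id. Qed.
Lemma dpl_eq f x l1 l : derivable_pt_lim f x l1 -> l = l1 -> derivable_pt_lim f x l.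
Proof. intros H ->; exact H. Qed.

Definition cstF (a : R) : nat -> R -> R := fun k _ => match k with O => a | _ => 0 end.
Definition linF (a b : R) : nat -> R -> R :=
  fun k x => match k with O => a + b * x | S O => b | _ => 0 end.
Definition sqF : nat -> R -> R :=
  fun k x => match k with O => x ^ 2 | S O => 2 * x | S (S O) => 2 | _ => 0 end.
Fixpoint ff (m : R) (k : nat) : R := match k with O => 1 | S j => ff m j * (m - INR j) end.
Definition pwF (m : R) : nat -> R -> R := fun k x => ff m k * Rpower x (m - INR k).
Definition lnF : nat -> R -> R :=
  fun k x => match k with O => 1 + ln x | S j => pwF (-1) j x end.
Definition rlnF : nat -> R -> R :=
  fun k x => match k with O => x * ln x | S O => 1 + ln x | S (S j) => pwF (-1) j x end.

Lemma cstF_ok dom a : smooth dom (cstF a).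
Proof. intros [|k] x _; simpl; apply derivable_pt_lim_const. Qed.

Lemma linF_ok dom a b : smooth dom (linF a b).
Proof.
  intros [|[|k]] x _; unfold linF; simpl; try apply derivable_pt_lim_const.
  apply (dpl_plus _ _ x 0 b); [apply derivable_pt_lim_const | apply (dpl_scal _ b x 1); [apply derivable_pt_lim_id| ring] | ring].
Qed.

Lemma sqF_ok dom : smooth dom sqF.
Proof.
  intros [|[|[|k]]] x _; cbv beta iota delta [sqF]; try apply derivable_pt_lim_const.
  - replace (2 * x) with (INR 2 * x ^ (2 - 1)) by (simpl; ring).
    apply derivable_pt_lim_pow.
  - apply (dpl_scal (fun y => y) 2 x 1); [apply derivable_pt_lim_id | ring].
Qed.

Lemma Rpower_m1 x m : 0 < x -> Rpower x (m - 1) = Rpower x m / x.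
Proof.
  intros Hx. unfold Rminus. rewrite Rpower_plus, Rpower_Ropp, Rpower_1 by auto. reflexivity.
Qed.

Lemma pwF_ok m : smooth (fun x => 0 < x) (pwF m).
Proof.
  intros k x Hx. unfold pwF.
  replace (ff m (S k) * Rpower x (m - INR (S k))) with
    (ff m k * ((m - INR k) * Rpower x (m - INR k - 1))).
  2:{ simpl ff. rewrite S_INR. replace (m - (INR k + 1)) with (m - INR k - 1) by ring. ring. }
  apply derivable_pt_lim_scal. apply derivable_pt_lim_power; auto.
Qed.

Lemma pw_val x m k : 0 < x -> Rpower x (m - INR k) = Rpower x m / x ^ k.
Proof.
  intros Hx. induction k.
  - simpl. rewrite Rminus_0_r. field.
  - rewrite S_INR. replace (m - (INR k + 1)) with (m - INR k - 1) by ring.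
    rewrite Rpower_m1, IHk by auto. simpl. field. split; try lra; apply pow_nonzero; lra.
Qed.

Lemma pwm1_0 x : 0 < x -> pwF (-1) 0 x = / x.
Proof.
  intros Hx. unfold pwF. simpl ff. rewrite pw_val by auto. replace (-1) with (- (1)) by ring.
  rewrite Rpower_Ropp, Rpower_1 by auto. simpl. field. lra.
Qed.

Lemma lnF_ok : smooth (fun x => 0 < x) lnF.
Proof.
  intros [|k] x Hx; simpl.
  - rewrite pwm1_0 by auto. apply (dpl_plus _ _ x 0 (/ x)); [apply derivable_pt_lim_const| apply derivable_pt_lim_ln; auto| ring].
  - apply pwF_ok; auto.
Qed.

Lemma rlnF_ok : smooth (fun x => 0 < x) rlnF.
Proof.
  intros [|[|k]] x Hx; simpl.
  - replace (1 + ln x) with (1 * ln x + x * / x) by (field; lra).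
    apply derivable_pt_lim_mult; [apply derivable_pt_lim_id | apply derivable_pt_lim_ln; auto].
  - rewrite pwm1_0 by auto. apply (dpl_plus _ _ x 0 (/ x)); [apply derivable_pt_lim_const| apply derivable_pt_lim_ln; auto| ring].
  - apply pwF_ok; auto.
Qed.

Definition zD : list nat -> fn3 := prodD (cstF 0) (cstF 1) (cstF 1).
Definition fam1 (k : nat) : list nat -> fn3 :=
  match k with O => prodD (cstF 1) (cstF 1) (cstF 1) | _ => zD end.
Definition fam2 (k : nat) : list nat -> fn3 :=
  match k with O => prodD (linF 0 1) (cstF 1) (cstF 1)
  | S O => prodD (cstF 1) (linF 0 1) (cstF 1) | _ => zD end.
Definition fam3 (b c p : R) (k : nat) : list nat -> fn3 :=
  match k with O => zD
  | S O => prodD (cstF 1) (linF 0 (/ 2 * p * b)) (cstF 1)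
  | _ => prodD (cstF 1) (cstF 1) (linF (p * c) b) end.
Definition fam4 (a b c p n : R) (k : nat) : list nat -> fn3 :=
  match k with O => zD
  | S O => prodD (cstF 1) (pwF (3 - n)) (cstF (a + b + (1 - p) * c))
  | _ => prodD (cstF 1) (pwF (2 - n)) (linF ((2 - n) * (p * c)) ((2 - n) * (b + (1 - p) * c))) end.
Definition fam5 (b c p : R) (k : nat) : list nat -> fn3 :=
  match k with O => zD
  | S O => prodD (cstF 1) rlnF (cstF (/ 2 * p * b))
  | _ => prodD (cstF 1) lnF (linF (p * c) b) end.
Definition fam6 (k : nat) : list nat -> fn3 :=
  match k with O => prodD sqF (cstF 1) (cstF 1)
  | S O => zD | _ => prodD (linF 0 1) (cstF 1) (linF 0 1) end.

Lemma Rp_m2 u p : 0 < u -> Rpower u (p - 2) = Rpower u p / u ^ 2.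
Proof. intros. replace (p - 2) with (p - INR 2) by (simpl; ring). apply pw_val; auto. Qed.
Lemma Rp_m1 u p : 0 < u -> Rpower u (p - 1) = Rpower u p / u.
Proof. intros. apply Rpower_m1; auto. Qed.

Ltac famsimp := unfold prolong_residual, fam1, fam2, fam3, fam4, fam5, fam6, zD, prodD;
  cbn [cnt Nat.eqb cstF linF sqF lnF rlnF].

Lemma res1 a b c p n t r u ut ur utr urr : 0 < r -> 0 < u ->
  prolong_residual a b c p n (fam1 0) (fam1 1) (fam1 2) t r u ut ur utr urr = 0.
Proof. intros. famsimp. ring. Qed.

Lemma res3 a b c p n t r u ut ur utr urr : 0 < r -> 0 < u -> c * (p - 1) = 0 ->
  prolong_residual a b c p n (fam3 b c p 0) (fam3 b c p 1) (fam3 b c p 2) t r u ut ur utr urr = 0.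
Proof. intros. famsimp. rewrite Rp_m1, Rp_m2 by auto. destruct (Rmult_integral _ _ H1) as [->|Hp].
  - field; lra.
  - assert (p = 1) by lra. subst p. rewrite Rpower_1 by auto. field; lra.
Qed.

Lemma res2 a b c p n t r u ut ur utr urr : 0 < r -> 0 < u ->
  prolong_residual a b c p n (fam2 0) (fam2 1) (fam2 2) t r u ut ur utr urr = 0.
Proof. intros. famsimp. field; lra. Qed.

Lemma res6 a b c p n t r u ut ur utr urr : 0 < r -> 0 < u -> c = 0 -> p = -4 ->
  prolong_residual a b c p n (fam6 0) (fam6 1) (fam6 2) t r u ut ur utr urr = 0.
Proof. intros. subst. famsimp. rewrite Rp_m1, Rp_m2 by auto. field; lra. Qed.

Lemma Rp32 r n : 0 < r -> Rpower r (3 - n) = r * Rpower r (2 - n).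
Proof. intros. replace (2 - n) with ((3 - n) - 1) by ring. rewrite Rpower_m1 by auto. field; lra. Qed.

Lemma res4 a b c p n t r u ut ur utr urr : 0 < r -> 0 < u -> b <> 0 -> p <> 0 ->
  c * (p - 1) = 0 -> n <> 2 -> (a + b + (1 - p) * c) * (n - 3) = b * p * (n / 2 - 1) ->
  prolong_residual a b c p n (fam4 a b c p n 0) (fam4 a b c p n 1) (fam4 a b c p n 2) t r u ut ur utr urr = 0.
Proof.
  intros Hr Hu Hb Hp0 Hc Hn Hrel. famsimp. unfold pwF. rewrite !(pw_val r) by auto. cbn [ff INR pow].
  rewrite Rp32 by auto. 
  assert (n <> 3). { intro; subst. assert (b * p = 0) by lra. destruct (Rmult_integral _ _ H); lra. }
  assert (Q: 0 < Rpower r (2 - n)) by apply exp_pos.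
  destruct (Rmult_integral _ _ Hc) as [->|Hp].
  - assert (a = b * p * (n / 2 - 1) / (n - 3) - b).
    { assert (n - 3 <> 0) by lra. field_simplify_eq; auto. lra. }
    subst a. rewrite Rp_m1, Rp_m2 by auto. field. repeat split; lra.
  - assert (p = 1) by lra. subst p.
    assert (a = b * (n / 2 - 1) / (n - 3) - b).
    { assert (n - 3 <> 0) by lra. field_simplify_eq; auto. lra. }
    subst a. rewrite Rp_m1, Rp_m2, Rpower_1 by auto. field. repeat split; lra.
Qed.

Lemma res5 a b c p n t r u ut ur utr urr : 0 < r -> 0 < u ->
  c * (p - 1) = 0 -> n = 2 -> a = - b ->
  prolong_residual a b c p n (fam5 b c p 0) (fam5 b c p 1) (fam5 b c p 2) t r u ut ur utr urr = 0.
Proof.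
  intros Hr Hu Hc Hn Ha. subst n a. famsimp. unfold pwF. rewrite !(pw_val r) by auto. cbn [ff INR pow].
  replace (-1) with (- (1)) by ring. rewrite Rpower_Ropp, Rpower_1 by auto.
  destruct (Rmult_integral _ _ Hc) as [->|Hp].
  - rewrite Rp_m1, Rp_m2 by auto. field. repeat split; lra.
  - assert (p = 1) by lra. subst p.
    rewrite Rp_m1, Rp_m2, Rpower_1 by auto. field. repeat split; lra.
Qed.




Lemma zD_ok : fam_ok zD.
Proof. apply prodD_ok; apply cstF_ok. Qed.

Ltac famok := first [ apply zD_ok | apply prodD_ok;
  first [apply cstF_ok | apply linF_ok | apply sqF_ok | apply pwF_ok | apply lnF_ok | apply rlnF_ok] ].

Lemma fam1_ok k : fam_ok (fam1 k). Proof. destruct k as [|[|k]]; simpl; famok. Qed.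
Lemma fam2_ok k : fam_ok (fam2 k). Proof. destruct k as [|[|k]]; simpl; famok. Qed.
Lemma fam3_ok b c p k : fam_ok (fam3 b c p k). Proof. destruct k as [|[|k]]; simpl; famok. Qed.
Lemma fam4_ok a b c p n k : fam_ok (fam4 a b c p n k). Proof. destruct k as [|[|k]]; simpl; famok. Qed.
Lemma fam5_ok b c p k : fam_ok (fam5 b c p k). Proof. destruct k as [|[|k]]; simpl; famok. Qed.
Lemma fam6_ok k : fam_ok (fam6 k). Proof. destruct k as [|[|k]]; simpl; famok. Qed.

Ltac nilsimp := unfold fam1, fam2, fam3, fam4, fam5, fam6, zD, prodD;
  cbn [cnt Nat.eqb cstF linF sqF lnF rlnF]; try (unfold pwF; rewrite !(pw_val _ _ 0) by auto; cbn [ff INR pow]).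

Lemma fam1_nil k t r u : 0 < r -> 0 < u -> (k < 3)%nat -> fam1 k nil t r u = Defs.comp X1 k t r u.
Proof. intros. destruct k as [|[|[|k]]]; try lia; simpl; nilsimp; ring. Qed.
Lemma fam2_nil k t r u : 0 < r -> 0 < u -> (k < 3)%nat -> fam2 k nil t r u = Defs.comp X2 k t r u.
Proof. intros. destruct k as [|[|[|k]]]; try lia; simpl; nilsimp; ring. Qed.
Lemma fam3_nil b c p k t r u : 0 < r -> 0 < u -> (k < 3)%nat -> fam3 b c p k nil t r u = Defs.comp (X3 b c p) k t r u.
Proof. intros. destruct k as [|[|[|k]]]; try lia; simpl; nilsimp; ring. Qed.
Lemma fam4_nil a b c p n k t r u : 0 < r -> 0 < u -> (k < 3)%nat -> fam4 a b c p n k nil t r u = Defs.comp (X4 a b c p n) k t r u.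
Proof. intros. destruct k as [|[|[|k]]]; try lia; simpl; nilsimp; field. Qed.
Lemma fam5_nil b c p k t r u : 0 < r -> 0 < u -> (k < 3)%nat -> fam5 b c p k nil t r u = Defs.comp (X5 b c p) k t r u.
Proof. intros. destruct k as [|[|[|k]]]; try lia; simpl; nilsimp; ring. Qed.
Lemma fam6_nil k t r u : 0 < r -> 0 < u -> (k < 3)%nat -> fam6 k nil t r u = Defs.comp X6 k t r u.
Proof. intros. destruct k as [|[|[|k]]]; try lia; simpl; nilsimp; ring. Qed.

Lemma pd_ext i F G D : (forall t r u, 0 < r -> 0 < u -> F t r u = G t r u) -> pd i G D -> pd i F D.
Proof.
  intros HFG HG t r u Hr Hu. specialize (HG t r u Hr Hu).
  destruct i as [|[|i]].
  - apply derivable_pt_lim_ext with (f := fun s => G s r u); auto.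
    intros; symmetry; apply HFG; auto.
  - apply derivable_pt_lim_locally_ext with (f := fun s => G t s u) (a := 0) (b := r + 1); auto.
    + lra.
    + intros; symmetry; apply HFG; lra.
  - apply derivable_pt_lim_locally_ext with (f := fun s => G t r s) (a := 0) (b := u + 1); auto.
    + lra.
    + intros; symmetry; apply HFG; lra.
Qed.

Lemma res_congr a b c p n Dt Dx De Et Ex Ee t r u ut ur utr urr :
  (forall l, Dt l t r u = Et l t r u) -> (forall l, Dx l t r u = Ex l t r u) ->
  (forall l, De l t r u = Ee l t r u) ->
  prolong_residual a b c p n Dt Dx De t r u ut ur utr urr =
  prolong_residual a b c p n Et Ex Ee t r u ut ur utr urr.
Proof. intros H1 H2 H3. unfold prolong_residual. rewrite !H1, !H2, !H3. reflexivity. Qed.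

Lemma res_add a b c p n D1 D2 D3 E1 E2 E3 t r u ut ur utr urr :
  prolong_residual a b c p n (addD D1 E1) (addD D2 E2) (addD D3 E3) t r u ut ur utr urr =
  prolong_residual a b c p n D1 D2 D3 t r u ut ur utr urr +
  prolong_residual a b c p n E1 E2 E3 t r u ut ur utr urr.
Proof. unfold prolong_residual, addD. ring. Qed.

Lemma res_scl a b c p n k D1 D2 D3 t r u ut ur utr urr :
  prolong_residual a b c p n (sclD k D1) (sclD k D2) (sclD k D3) t r u ut ur utr urr =
  k * prolong_residual a b c p n D1 D2 D3 t r u ut ur utr urr.
Proof. unfold prolong_residual, sclD. ring. Qed.

From Stdlib Require Import Classical.

Definition combF a b c p n (k1 k2 k3 k4 k5 k6 : R) (j : nat) : list nat -> fn3 :=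
  addD (sclD k1 (fam1 j)) (addD (sclD k2 (fam2 j)) (addD (sclD k3 (fam3 b c p j))
    (addD (sclD k4 (fam4 a b c p n j)) (addD (sclD k5 (fam5 b c p j)) (sclD k6 (fam6 j)))))).

Lemma combF_ok a b c p n k1 k2 k3 k4 k5 k6 j : fam_ok (combF a b c p n k1 k2 k3 k4 k5 k6 j).
Proof.
  unfold combF. repeat apply addD_ok; apply sclD_ok;
  first [apply fam1_ok | apply fam2_ok | apply fam3_ok | apply fam4_ok | apply fam5_ok | apply fam6_ok].
Qed.

Definition fixD (F : fn3) (D : list nat -> fn3) : list nat -> fn3 :=
  fun l => match l with nil => F | _ => D l end.

Lemma fixD_ok F D : fam_ok D -> (forall t r u, 0 < r -> 0 < u -> F t r u = D nil t r u) ->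
  derivs_of F (fixD F D).
Proof.
  intros HD HF. split; [reflexivity|]. intros l i Hi. destruct l as [|x l].
  - simpl. apply pd_ext with (G := D nil); [exact HF | apply HD; auto].
  - apply HD; auto.
Qed.

Lemma backward a b c p n (hb : b <> 0) (hp : p <> 0) X k1 k2 k3 k4 k5 k6 :
  (~ cond3 c p -> k3 = 0) -> (~ cond4 a b c p n -> k4 = 0) ->
  (~ cond5 a b c p n -> k5 = 0) -> (~ cond6 c p -> k6 = 0) ->
  vf_eq X (vf_add (vf_scale k1 X1) (vf_add (vf_scale k2 X2)
               (vf_add (vf_scale k3 (X3 b c p)) (vf_add (vf_scale k4 (X4 a b c p n))
               (vf_add (vf_scale k5 (X5 b c p)) (vf_scale k6 X6)))))) ->
  point_symmetry a b c p n X.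
Proof.
  intros C3 C4 C5 C6 HX.
  set (CF := combF a b c p n k1 k2 k3 k4 k5 k6).
  assert (Hnil : forall j t r u, 0 < r -> 0 < u -> (j < 3)%nat -> Defs.comp X j t r u = CF j nil t r u).
  { intros j t r u Hr Hu Hj. destruct (HX t r u Hr Hu) as [E0 [E1 E2]].
    unfold CF, combF, addD, sclD.
    rewrite fam1_nil, fam2_nil, fam3_nil, fam4_nil, fam5_nil, fam6_nil by auto.
    destruct j as [|[|[|j]]]; try lia; simpl; [rewrite E0|rewrite E1|rewrite E2]; reflexivity. }
  exists (fixD (vt X) (CF 0%nat)), (fixD (vr X) (CF 1%nat)), (fixD (vu X) (CF 2%nat)).
  split; [apply fixD_ok; [apply combF_ok| intros; apply (Hnil 0%nat); auto]|].
  split; [apply fixD_ok; [apply combF_ok| intros; apply (Hnil 1%nat); auto]|].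
  split; [apply fixD_ok; [apply combF_ok| intros; apply (Hnil 2%nat); auto]|].
  intros t r u ut ur utr urr Hr Hu.
  rewrite res_congr with (Et := CF 0%nat) (Ex := CF 1%nat) (Ee := CF 2%nat).
  2,3,4: intros [|x l]; [simpl| reflexivity].
  2: apply (Hnil 0%nat); auto.
  2: apply (Hnil 1%nat); auto.
  2: apply (Hnil 2%nat); auto.
  unfold CF, combF. rewrite !res_add, !res_scl.
  rewrite res1, res2 by auto.
  assert (T3 : k3 * prolong_residual a b c p n (fam3 b c p 0) (fam3 b c p 1) (fam3 b c p 2) t r u ut ur utr urr = 0).
  { destruct (classic (cond3 c p)) as [H|H]; [rewrite res3 by auto; ring| rewrite C3 by auto; ring]. }
  assert (T4 : k4 * prolong_residual a b c p n (fam4 a b c p n 0) (fam4 a b c p n 1) (fam4 a b c p n 2) t r u ut ur utr urr = 0).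
  { destruct (classic (cond4 a b c p n)) as [[H1 [H2 H3]]|H]; [rewrite res4 by auto; ring| rewrite C4 by auto; ring]. }
  assert (T5 : k5 * prolong_residual a b c p n (fam5 b c p 0) (fam5 b c p 1) (fam5 b c p 2) t r u ut ur utr urr = 0).
  { destruct (classic (cond5 a b c p n)) as [[H1 [H2 H3]]|H]; [rewrite res5 by auto; ring| rewrite C5 by auto; ring]. }
  assert (T6 : k6 * prolong_residual a b c p n (fam6 0) (fam6 1) (fam6 2) t r u ut ur utr urr = 0).
  { destruct (classic (cond6 c p)) as [[H1 H2]|H]; [rewrite res6 by auto; ring| rewrite C6 by auto; ring]. }
  rewrite T3, T4, T5, T6. ring.
Qed.

Lemma Rpm1 r : 0 < r -> Rpower r (-1) = / r.
Proof. intros. replace (-1) with (- (1)) by ring. rewrite Rpower_Ropp, Rpower_1 by auto. reflexivity. Qed.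

Lemma bracket_of (FX FY : nat -> list nat -> fn3) X Y Z :
  (forall k, fam_ok (FX k)) -> (forall k, fam_ok (FY k)) ->
  (forall k t r u, 0 < r -> 0 < u -> (k < 3)%nat -> FX k nil t r u = Defs.comp X k t r u) ->
  (forall k t r u, 0 < r -> 0 < u -> (k < 3)%nat -> FY k nil t r u = Defs.comp Y k t r u) ->
  (forall t r u, 0 < r -> 0 < u -> forall k, (k < 3)%nat ->
      Defs.comp Z k t r u =
        (Defs.comp X 0 t r u * FY k [0%nat] t r u - Defs.comp Y 0 t r u * FX k [0%nat] t r u)
      + (Defs.comp X 1 t r u * FY k [1%nat] t r u - Defs.comp Y 1 t r u * FX k [1%nat] t r u)
      + (Defs.comp X 2 t r u * FY k [2%nat] t r u - Defs.comp Y 2 t r u * FX k [2%nat] t r u)) ->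
  is_bracket X Y Z.
Proof.
  intros OX OY NX NY HZ. exists (fun k j => FX k [j]), (fun k j => FY k [j]). split; [|exact HZ].
  intros k j Hk Hj. split.
  - apply pd_ext with (G := FX k nil); [intros; symmetry; apply NX; auto| apply OX; auto].
  - apply pd_ext with (G := FY k nil); [intros; symmetry; apply NY; auto| apply OY; auto].
Qed.

Ltac brsimp := intros t r u Hr Hu k Hk; destruct k as [|[|[|k]]]; try lia;
  unfold fam1, fam2, fam3, fam4, fam5, fam6, zD, prodD;
  cbn [cnt Nat.eqb cstF linF sqF lnF rlnF Defs.comp X1 X2 X3 X4 X5 X6 vf_zero vf_add vf_scale vt vr vu];
  try (unfold pwF; rewrite !(pw_val r) by auto; cbn [ff INR pow]);
  try (rewrite Rpm1 by auto).

Ltac br fx fy := eapply bracket_of with (FX := fx) (FY := fy);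
  [intro; first [apply fam1_ok | apply fam2_ok | apply fam3_ok | apply fam4_ok | apply fam5_ok | apply fam6_ok]
  |intro; first [apply fam1_ok | apply fam2_ok | apply fam3_ok | apply fam4_ok | apply fam5_ok | apply fam6_ok]
  |intros; first [apply fam1_nil | apply fam2_nil | apply fam3_nil | apply fam4_nil | apply fam5_nil | apply fam6_nil]; auto
  |intros; first [apply fam1_nil | apply fam2_nil | apply fam3_nil | apply fam4_nil | apply fam5_nil | apply fam6_nil]; auto
  |brsimp].

Lemma br12 : is_bracket X1 X2 X1.
Proof. br fam1 fam2; ring. Qed.
Lemma br13 b c p : is_bracket X1 (X3 b c p) vf_zero.
Proof. br fam1 (fam3 b c p); ring. Qed.
Lemma br23 b c p : is_bracket X2 (X3 b c p) vf_zero.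
Proof. br fam2 (fam3 b c p); ring. Qed.
Lemma br14 a b c p n : is_bracket X1 (X4 a b c p n) vf_zero.
Proof. br fam1 (fam4 a b c p n); ring. Qed.
Lemma br24 a b c p n : is_bracket X2 (X4 a b c p n) (vf_scale (2 - n) (X4 a b c p n)).
Proof. br fam2 (fam4 a b c p n); try rewrite Rp32 by auto; field; lra. Qed.
Lemma br34 a b c p n : c * (p - 1) = 0 ->
  is_bracket (X3 b c p) (X4 a b c p n) (vf_scale (p * (1 - n / 2) * b) (X4 a b c p n)).
Proof.
  intros Hc. br (fam3 b c p) (fam4 a b c p n); try rewrite Rp32 by auto;
  destruct (Rmult_integral _ _ Hc) as [->|Hp]; try (assert (p = 1) by lra; subst p); field; lra.
Qed.
Lemma br15 b c p : is_bracket X1 (X5 b c p) vf_zero.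
Proof. br fam1 (fam5 b c p); ring. Qed.
Lemma br25 b c p : is_bracket X2 (X5 b c p) (X3 b c p).
Proof. br fam2 (fam5 b c p); field; lra. Qed.
Lemma br35 b c p : is_bracket (X3 b c p) (X5 b c p) (vf_scale (p * b / 2) (X3 b c p)).
Proof. br (fam3 b c p) (fam5 b c p); field; lra. Qed.
Lemma br16 b c p : b <> 0 -> c = 0 -> p = -4 ->
  is_bracket X1 X6 (vf_add (vf_scale 2 X2) (vf_scale (1 / b) (X3 b c p))).
Proof. intros Hb -> ->. br fam1 fam6; field; auto. Qed.
Lemma br26 : is_bracket X2 X6 X6.
Proof. br fam2 fam6; ring. Qed.
Lemma br36 b c p : c = 0 -> is_bracket (X3 b c p) X6 vf_zero.
Proof. intros ->. br (fam3 b 0 p) fam6; ring. Qed.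
Lemma br46 a b c p n : c = 0 -> is_bracket (X4 a b c p n) X6 vf_zero.
Proof. intros ->. br (fam4 a b 0 p n) fam6; try rewrite Rp32 by auto; field; lra. Qed.
Lemma br56 b c p : c = 0 -> is_bracket (X5 b c p) X6 vf_zero.
Proof. intros ->. br (fam5 b 0 p) fam6; ring. Qed.

Lemma step1 a b c p n Dt Dx De t r u :
  (forall ut ur utr urr, prolong_residual a b c p n Dt Dx De t r u ut ur utr urr = 0) ->
  Dx [2%nat] t r u = 0 /\ (c + b * Rpower u p) * Dt [2%nat] t r u = 0 /\
  Dx [0%nat] t r u = (c + b * Rpower u p) * Dt [1%nat] t r u.
Proof.
  intros H.
  pose proof (H 0 0 0 0) as H1. pose proof (H 0 0 1 0) as H2.
  pose proof (H 1 0 0 0) as H3. pose proof (H 1 0 1 0) as H4.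
  pose proof (H 0 1 0 0) as H5. pose proof (H 0 1 1 0) as H6.
  unfold prolong_residual in *. cbv zeta in *.
  split; [|split]; lra.
Qed.

Lemma const_pos f : (forall x, 0 < x -> derivable_pt_lim f x 0) ->
  forall x y, 0 < x -> 0 < y -> f x = f y.
Proof.
  intros H x y Hx Hy.
  assert (K : forall x y, 0 < x -> x < y -> f x = f y).
  { intros x0 y0 H0 H1. destruct (MVT_cor2 f (fun _ => 0) x0 y0 H1) as [z [Hz _]].
    - intros z Hz. apply H. lra.
    - lra. }
  destruct (Rtotal_order x y) as [h|[h|h]]; [apply K; auto| subst; reflexivity| symmetry; apply K; auto].
Qed.

Lemma const_all f : (forall x, derivable_pt_lim f x 0) -> forall x y, f x = f y.
Proof.
  intros H x y.
  assert (K : forall x y, x < y -> f x = f y).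
  { intros x0 y0 H1. destruct (MVT_cor2 f (fun _ => 0) x0 y0 H1) as [z [Hz _]].
    - intros z Hz. apply H.
    - lra. }
  destruct (Rtotal_order x y) as [h|[h|h]]; [apply K; auto| subst; reflexivity| symmetry; apply K; auto].
Qed.

Lemma uniq_all f g x l1 l2 : (forall s, f s = g s) -> derivable_pt_lim f x l1 ->
  derivable_pt_lim g x l2 -> l1 = l2.
Proof.
  intros E H1 H2. apply (uniqueness_limite f x); auto.
  apply derivable_pt_lim_ext with (f := g); auto.
Qed.

Lemma uniq_pos f g x l1 l2 : (forall s, 0 < s -> f s = g s) -> 0 < x -> derivable_pt_lim f x l1 ->
  derivable_pt_lim g x l2 -> l1 = l2.
Proof.
  intros E Hx H1 H2. apply (uniqueness_limite f x); auto.
  apply derivable_pt_lim_locally_ext with (f := g) (a := 0) (b := x + 1); auto.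
  - lra.
  - intros; symmetry; apply E; lra.
Qed.

Lemma deriv_const_all f x l c : (forall s, f s = c) -> derivable_pt_lim f x l -> l = 0.
Proof. intros E H. apply (uniq_all f (fun _ => c) x); auto. apply derivable_pt_lim_const. Qed.
Lemma deriv_const_pos f x l c : (forall s, 0 < s -> f s = c) -> 0 < x -> derivable_pt_lim f x l -> l = 0.
Proof. intros E Hx H. apply (uniq_pos f (fun _ => c) x); auto. apply derivable_pt_lim_const. Qed.

Lemma dT F D l t r u : derivs_of F D -> 0 < r -> 0 < u ->
  derivable_pt_lim (fun s => D l s r u) t (D (0%nat :: l) t r u).
Proof. intros [_ H] Hr Hu. apply (H l 0%nat); auto. Qed.
Lemma dR F D l t r u : derivs_of F D -> 0 < r -> 0 < u ->
  derivable_pt_lim (fun s => D l t s u) r (D (1%nat :: l) t r u).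
Proof. intros [_ H] Hr Hu. apply (H l 1%nat); auto. Qed.
Lemma dU F D l t r u : derivs_of F D -> 0 < r -> 0 < u ->
  derivable_pt_lim (fun s => D l t r s) u (D (2%nat :: l) t r u).
Proof. intros [_ H] Hr Hu. apply (H l 2%nat); auto. Qed.

Lemma Rpower_inj u v p : 0 < u -> 0 < v -> p <> 0 -> Rpower u p = Rpower v p -> u = v.
Proof.
  intros Hu Hv Hp E. unfold Rpower in E. apply exp_inv in E.
  apply ln_inv; auto. apply (Rmult_eq_reg_l p); auto.
Qed.

Lemma Rpower2_ne1 p : p <> 0 -> Rpower 2 p <> 1.
Proof.
  intros Hp E. rewrite <- (Rpower_O 2) in E by lra. unfold Rpower in E. apply exp_inv in E.
  rewrite Rmult_0_l in E. apply Rmult_integral in E. destruct E as [E|E]; [auto|].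
  rewrite <- ln_1 in E. apply ln_inv in E; lra.
Qed.

Lemma kill_F c b p g : b <> 0 -> p <> 0 ->
  (forall u, 0 < u -> (c + b * Rpower u p) * g u = 0) ->
  (forall u, 0 < u -> exists l, derivable_pt_lim g u l) ->
  forall u, 0 < u -> g u = 0.
Proof.
  intros Hb Hp H Hd u Hu. destruct (Req_dec (g u) 0) as [E|E]; [exact E|exfalso].
  assert (F0 : c + b * Rpower u p = 0).
  { destruct (Rmult_integral _ _ (H u Hu)); auto; contradiction. }
  destruct (Hd u Hu) as [l Hl].
  assert (Z : forall v, 0 < v -> v <> u -> g v = 0).
  { intros v Hv Hvu. destruct (Rmult_integral _ _ (H v Hv)) as [F1|F1]; auto.
    exfalso. apply Hvu. apply (Rpower_inj v u p); auto.
    apply (Rmult_eq_reg_l b); auto. lra. }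
  set (e := 1). assert (He : 0 < e) by (unfold e; lra).
  destruct (Hl e He) as [d Hdel].
  set (h := Rmin (d / 2) (Rmin (u / 2) (Rabs (g u) / (Rabs l + 2)))).
  assert (Hgu : 0 < Rabs (g u)) by (apply Rabs_pos_lt; auto).
  assert (Hd0 : 0 < d) by apply cond_pos.
  assert (Hh : 0 < h).
  { unfold h. apply Rmin_pos; [lra| apply Rmin_pos; [lra|]].
    apply Rdiv_lt_0_compat; [lra| pose proof (Rabs_pos l); lra]. }
  assert (h1 : h <= d / 2) by apply Rmin_l.
  assert (h2 : h <= u / 2) by (unfold h; eapply Rle_trans; [apply Rmin_r| apply Rmin_l]).
  assert (h3 : h <= Rabs (g u) / (Rabs l + 2)) by (unfold h; eapply Rle_trans; [apply Rmin_r| apply Rmin_r]).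
  assert (Hne : h <> 0) by lra.
  assert (Habs : Rabs h < d) by (rewrite Rabs_right; lra).
  specialize (Hdel h Hne Habs).
  rewrite (Z (u + h)) in Hdel by lra.
  unfold e in Hdel.
  assert (Q : Rabs (g u) / h >= Rabs l + 2).
  { assert (Rabs l + 2 > 0) by (pose proof (Rabs_pos l); lra).
    apply Rle_ge. apply (Rmult_le_reg_r h); auto. unfold Rdiv. rewrite Rmult_assoc, Rinv_l by auto.
    rewrite Rmult_1_r. apply (Rmult_le_reg_r (/ (Rabs l + 2))). apply Rinv_0_lt_compat; auto.
    replace ((Rabs l + 2) * h * / (Rabs l + 2)) with h by (field; lra). exact h3. }
  replace ((0 - g u) / h - l) with (- (g u / h + l)) in Hdel by (field; auto).
  rewrite Rabs_Ropp in Hdel.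
  assert (Rabs (g u / h) <= Rabs (g u / h + l) + Rabs l).
  { replace (g u / h) with ((g u / h + l) + - l) at 1 by ring.
    eapply Rle_trans; [apply Rabs_triang| rewrite Rabs_Ropp; lra]. }
  unfold Rdiv in H0, Q. rewrite Rabs_mult, Rabs_inv in H0. rewrite (Rabs_right h) in H0 by lra. lra.
Qed.

Lemma Rpower_1_base x : Rpower 1 x = 1.
Proof. unfold Rpower. rewrite ln_1, Rmult_0_r. apply exp_0. Qed.

Lemma Rpower_4 x : Rpower 4 x = Rpower 2 x * Rpower 2 x.
Proof.
  unfold Rpower. rewrite <- exp_plus. f_equal.
  replace 4 with (2 * 2) by ring. rewrite ln_mult by lra. ring.
Qed.

Lemma sep3 p al be ga : p <> 0 ->
  (forall u, 0 < u -> al + be * u * Rpower u (p - 1) + ga * Rpower u (p - 1) = 0) ->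
  be = 0 /\ (p <> 1 -> al = 0 /\ ga = 0) /\ (p = 1 -> al + ga = 0).
Proof.
  intros Hp H.
  destruct (Req_dec p 1) as [E|E].
  - subst p. replace (1 - 1) with 0 in H by ring.
    pose proof (H 1 ltac:(lra)) as H1. pose proof (H 2 ltac:(lra)) as H2.
    rewrite Rpower_O in H1, H2 by lra. split; [lra| split; [intro; lra| intro; lra]].
  - pose proof (H 1 ltac:(lra)) as H1. pose proof (H 2 ltac:(lra)) as H2.
    pose proof (H 4 ltac:(lra)) as H4.
    rewrite Rpower_1_base in H1. rewrite Rpower_4 in H4.
    set (q := Rpower 2 (p - 1)) in *.
    assert (Hq1 : q <> 1) by (apply Rpower2_ne1; lra).
    assert (Hq0 : 0 < q) by apply exp_pos.
    assert (Hq2 : 2 * q <> 1).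
    { unfold q. rewrite Rpower_m1 by lra. intro C. apply (Rpower2_ne1 p Hp). lra. }
    match type of H1 with ?L1 = 0 => match type of H2 with ?L2 = 0 =>
      match type of H4 with ?L4 = 0 =>
    assert (K : - q * (2 * q - 1) * be = (q + 1) * (L2 - L1) - (L4 - L1)) by ring end end end.
    rewrite H1, H2, H4 in K.
    assert (Kb : be = 0).
    { assert (- q * (2 * q - 1) <> 0).
      { apply Rmult_integral_contrapositive; split; [lra|]. lra. }
      apply (Rmult_eq_reg_l (- q * (2 * q - 1))); auto. lra. }
    subst be.
    assert (Kg : (q - 1) * ga = 0) by lra.
    destruct (Rmult_integral _ _ Kg) as [X|X]; [lra|].
    subst ga. split; [reflexivity| split; [intro; lra| intro; contradiction]].
Qed.

Lemma quad_zero al be ga : (forall u, 0 < u -> al + be * u + ga * u ^ 2 = 0) -> ga = 0 /\ be = 0 /\ al = 0.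
Proof.
  intros H. pose proof (H 1 ltac:(lra)). pose proof (H 2 ltac:(lra)). pose proof (H 3 ltac:(lra)).
  simpl in *. lra.
Qed.

Lemma tau_solve th t1 t2 : (forall t, derivable_pt_lim th t (t1 t)) ->
  (forall t, derivable_pt_lim t1 t (t2 t)) -> (forall t, t2 t = t2 0) ->
  exists t0 ka si, forall t, th t = t0 + ka * t + si * t ^ 2 /\ t1 t = ka + 2 * si * t /\ t2 t = 2 * si.
Proof.
  intros D1 D2 C2. set (si := t2 0 / 2).
  assert (G : forall t, t1 t - 2 * si * t = t1 0 - 2 * si * 0).
  { intros t. apply (const_all (fun t => t1 t - 2 * si * t)). intros x.
    apply (dpl_minus _ _ x (t2 x) (2 * si)); [apply D2| apply (dpl_scal (fun y => y) (2 * si) x 1); [apply derivable_pt_lim_id| ring]|].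
    rewrite C2. unfold si. field. }
  set (ka := t1 0).
  assert (Hh : forall t, th t - ka * t - si * t ^ 2 = th 0 - ka * 0 - si * 0 ^ 2).
  { intros t. apply (const_all (fun t => th t - ka * t - si * t ^ 2)). intros x.
    apply (dpl_minus _ _ x (t1 x - ka) (si * (2 * x))).
    - apply (dpl_minus _ _ x (t1 x) ka); [apply D1| apply (dpl_scal (fun y => y) ka x 1); [apply derivable_pt_lim_id| ring]| ring].
    - apply (dpl_scal (fun y => y ^ 2) si x (2 * x)); [| ring].
      replace (2 * x) with (INR 2 * x ^ (2 - 1)) by (simpl; ring). apply derivable_pt_lim_pow.
    - specialize (G x). unfold ka. lra. }
  exists (th 0), ka, si. intros t. specialize (G t). specialize (Hh t). split; [|split].
  - simpl in Hh. lra.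
  - unfold ka. lra.
  - rewrite C2. unfold si. field.
Qed.

Lemma xi_solve1 n x2 x3 : (forall r, 0 < r -> derivable_pt_lim x2 r (x3 r)) ->
  (forall r, 0 < r -> x3 r + (n - 1) / r * x2 r = 0) ->
  forall r, 0 < r -> x2 r = x2 1 * Rpower r (1 - n).
Proof.
  intros D E.
  assert (W : forall r, 0 < r -> Rpower r (n - 1) * x2 r = Rpower 1 (n - 1) * x2 1).
  { intros r Hr. apply (const_pos (fun r => Rpower r (n - 1) * x2 r)); auto; [|lra].
    intros x Hx. apply (dpl_mult (fun r => Rpower r (n - 1)) x2 x ((n - 1) * Rpower x (n - 1 - 1)) (x3 x)).
    - apply derivable_pt_lim_power; auto.
    - apply D; auto.
    - rewrite (Rpower_m1 x (n - 1)) by auto. specialize (E x Hx).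
      replace (x3 x) with (- ((n - 1) / x * x2 x)) by lra. field. lra. }
  intros r Hr. specialize (W r Hr). rewrite Rpower_1_base in W.
  replace (1 - n) with (- (n - 1)) by ring. rewrite Rpower_Ropp.
  assert (0 < Rpower r (n - 1)) by apply exp_pos.
  apply (Rmult_eq_reg_l (Rpower r (n - 1))); [|lra]. rewrite W. field. lra.
Qed.

Lemma integ f f' g g' C : (forall r, 0 < r -> derivable_pt_lim f r (f' r)) ->
  (forall r, 0 < r -> derivable_pt_lim g r (g' r)) -> (forall r, 0 < r -> f' r = C * g' r) ->
  forall r, 0 < r -> f r = C * g r + (f 1 - C * g 1).
Proof.
  intros Df Dg E r Hr.
  assert (K : f r - C * g r = f 1 - C * g 1).
  { apply (const_pos (fun r => f r - C * g r)); auto; [|lra]. intros x Hx.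
    apply (dpl_minus _ _ x (f' x) (C * g' x)); [apply Df; auto| apply dpl_scal with (l1 := g' x); [apply Dg; auto| ring]|].
    rewrite E; auto; ring. }
  lra.
Qed.

Lemma W_eq u p : 0 < u -> Rpower u p = u * Rpower u (p - 1).
Proof. intros. rewrite Rpower_m1 by auto. field. lra. Qed.

Lemma analysis a b c p n X (hn : n <> 1) (hp : p <> 0) (hb : b <> 0) :
  point_symmetry a b c p n X ->
  exists (th t1 t2 xh x1 x2 x3 : R -> R) (A B : R -> R -> R),
    (forall t r u, 0 < r -> 0 < u -> vt X t r u = th t /\ vr X t r u = xh r /\ vu X t r u = A t r * u + B t r) /\
    (forall t, derivable_pt_lim th t (t1 t) /\ derivable_pt_lim t1 t (t2 t) /\ t2 t = t2 0) /\
    t2 0 * (p + 4) = 0 /\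
    (forall r, 0 < r -> derivable_pt_lim xh r (x1 r) /\ derivable_pt_lim x1 r (x2 r) /\
       derivable_pt_lim x2 r (x3 r) /\ x3 r + (n - 1) / r * x2 r = 0) /\
    (forall t r, 0 < r -> p * A t r = 2 * x1 r - 2 * t1 t) /\
    (forall t r, 0 < r -> (p <> 1 -> B t r = 0 /\ c * (2 * x1 r - 2 * t1 t) = 0) /\
                          (p = 1 -> c * (2 * x1 r - 2 * t1 t) = b * B t r)) /\
    (forall r, 0 < r -> b * (x2 r - (n - 1) / r * x1 r + (n - 1) / r ^ 2 * xh r - 4 * x2 r / p) = 4 * a * x2 r / p).
Proof.
  intros [Dt [Dx [De [HDt [HDx [HDe Hres]]]]]].
  assert (S1 : forall t r u, 0 < r -> 0 < u -> Dx [2%nat] t r u = 0 /\ (c + b * Rpower u p) * Dt [2%nat] t r u = 0 /\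
            Dx [0%nat] t r u = (c + b * Rpower u p) * Dt [1%nat] t r u).
  { intros t r u Hr Hu. apply (step1 a b c p n Dt Dx De). intros; apply Hres; auto. }
  assert (T2 : forall t r u, 0 < r -> 0 < u -> Dt [2%nat] t r u = 0).
  { intros t r u Hr Hu. apply (kill_F c b p (fun s => Dt [2%nat] t r s)); auto.
    - intros v Hv. apply (S1 t r v Hr Hv).
    - intros v Hv. exists (Dt [2%nat; 2%nat] t r v). apply (dU (vt X)); auto. }
  assert (X2z : forall t r u, 0 < r -> 0 < u -> Dx [2%nat] t r u = 0) by (intros; apply S1; auto).
  assert (TU : forall t r u, 0 < r -> 0 < u -> Dt nil t r u = Dt nil t r 1).
  { intros t r u Hr Hu. apply (const_pos (fun s => Dt nil t r s)); auto; [|lra].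
    intros x Hx. rewrite <- (T2 t r x Hr Hx). apply (dU (vt X)); auto. }
  assert (XU : forall t r u, 0 < r -> 0 < u -> Dx nil t r u = Dx nil t r 1).
  { intros t r u Hr Hu. apply (const_pos (fun s => Dx nil t r s)); auto; [|lra].
    intros x Hx. rewrite <- (X2z t r x Hr Hx). apply (dU (vr X)); auto. }
  assert (S4a : forall t r u, 0 < r -> 0 < u -> Dt [1%nat] t r u = Dt [1%nat] t r 1).
  { intros t r u Hr Hu. apply (uniq_pos (fun s => Dt nil t s u) (fun s => Dt nil t s 1) r); try assumption.
    - intros; apply TU; auto.
    - apply (dR (vt X)); auto.
    - apply (dR (vt X)); auto; lra. }
  assert (S4b : forall t r u, 0 < r -> 0 < u -> Dx [0%nat] t r u = Dx [0%nat] t r 1).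
  { intros t r u Hr Hu. apply (uniq_all (fun s => Dx nil s r u) (fun s => Dx nil s r 1) t).
    - intros; apply XU; auto.
    - apply (dT (vr X)); auto.
    - apply (dT (vr X)); auto; lra. }
  assert (S5 : forall t r, 0 < r -> Dt [1%nat] t r 1 = 0 /\ Dx [0%nat] t r 1 = 0).
  { intros t r Hr. destruct (S1 t r 1 Hr ltac:(lra)) as [_ [_ E1]].
    destruct (S1 t r 2 Hr ltac:(lra)) as [_ [_ E2]].
    rewrite S4a, S4b in E2 by lra. rewrite Rpower_1_base in E1.
    assert (Hne : b * (1 - Rpower 2 p) <> 0).
    { apply Rmult_integral_contrapositive; split; auto. pose proof (Rpower2_ne1 p hp). lra. }
    assert (K : b * (1 - Rpower 2 p) * Dt [1%nat] t r 1 = 0) by lra.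
    destruct (Rmult_integral _ _ K) as [K1|K1]; [contradiction|]. split; auto. rewrite E1, K1. ring. }
  assert (T1z : forall t r u, 0 < r -> 0 < u -> Dt [1%nat] t r u = 0).
  { intros. rewrite S4a by auto. apply S5; auto. }
  assert (X0z : forall t r u, 0 < r -> 0 < u -> Dx [0%nat] t r u = 0).
  { intros. rewrite S4b by auto. apply S5; auto. }
  assert (TR : forall t r u, 0 < r -> 0 < u -> Dt nil t r u = Dt nil t 1 1).
  { intros t r u Hr Hu. rewrite TU by auto. apply (const_pos (fun s => Dt nil t s 1)); auto; [|lra].
    intros x Hx. rewrite <- (T1z t x 1 Hx ltac:(lra)). apply (dR (vt X)); auto; lra. }
  assert (XT : forall t r u, 0 < r -> 0 < u -> Dx nil t r u = Dx nil 0 r 1).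
  { intros t r u Hr Hu. rewrite XU by auto. apply (const_all (fun s => Dx nil s r 1)).
    intros x. rewrite <- (X0z x r 1 Hr ltac:(lra)). apply (dT (vr X)); auto; lra. }
  set (th := fun t => Dt nil t 1 1). set (t1 := fun t => Dt [0%nat] t 1 1).
  set (t2 := fun t => Dt [0%nat; 0%nat] t 1 1). set (t3 := fun t => Dt [0%nat; 0%nat; 0%nat] t 1 1).
  set (xh := fun r => Dx nil 0 r 1). set (x1 := fun r => Dx [1%nat] 0 r 1).
  set (x2 := fun r => Dx [1%nat; 1%nat] 0 r 1). set (x3 := fun r => Dx [1%nat; 1%nat; 1%nat] 0 r 1).
  assert (V1 : forall t r u, 0 < r -> 0 < u -> Dt [0%nat] t r u = t1 t).
  { intros t r u Hr Hu. apply (uniq_all (fun s => Dt nil s r u) (fun s => Dt nil s 1 1) t).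
    - intros; apply TR; auto.
    - apply (dT (vt X)); auto.
    - apply (dT (vt X)); auto; lra. }
  assert (V2 : forall t r u, 0 < r -> 0 < u -> Dt [0%nat; 0%nat] t r u = t2 t).
  { intros t r u Hr Hu. apply (uniq_all (fun s => Dt [0%nat] s r u) (fun s => Dt [0%nat] s 1 1) t).
    - intros; rewrite !V1 by (auto; lra); reflexivity.
    - apply (dT (vt X)); auto.
    - apply (dT (vt X)); auto; lra. }
  assert (V3 : forall t r u, 0 < r -> 0 < u -> Dt [2%nat; 0%nat] t r u = 0).
  { intros t r u Hr Hu. apply (deriv_const_pos (fun s => Dt [0%nat] t r s) u _ (t1 t)); try assumption.
    - intros; apply V1; auto.
    - apply (dU (vt X)); auto. }
  assert (V4 : forall t r u, 0 < r -> 0 < u -> Dt [2%nat; 2%nat] t r u = 0).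
  { intros t r u Hr Hu. apply (deriv_const_pos (fun s => Dt [2%nat] t r s) u _ 0); try assumption.
    - intros; apply T2; auto.
    - apply (dU (vt X)); auto. }
  assert (V5 : forall t r u, 0 < r -> 0 < u -> Dt [1%nat; 1%nat] t r u = 0).
  { intros t r u Hr Hu. apply (deriv_const_pos (fun s => Dt [1%nat] t s u) r _ 0); try assumption.
    - intros; apply T1z; auto.
    - apply (dR (vt X)); auto. }
  assert (V6 : forall t r u, 0 < r -> 0 < u -> Dt [2%nat; 1%nat] t r u = 0).
  { intros t r u Hr Hu. apply (deriv_const_pos (fun s => Dt [1%nat] t r s) u _ 0); try assumption.
    - intros; apply T1z; auto.
    - apply (dU (vt X)); auto. }
  assert (W1 : forall t r u, 0 < r -> 0 < u -> Dx [1%nat] t r u = x1 r).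
  { intros t r u Hr Hu. apply (uniq_pos (fun s => Dx nil t s u) (fun s => Dx nil 0 s 1) r); try assumption.
    - intros; apply XT; auto.
    - apply (dR (vr X)); auto.
    - apply (dR (vr X)); auto; lra. }
  assert (W2 : forall t r u, 0 < r -> 0 < u -> Dx [1%nat; 1%nat] t r u = x2 r).
  { intros t r u Hr Hu. apply (uniq_pos (fun s => Dx [1%nat] t s u) (fun s => Dx [1%nat] 0 s 1) r); try assumption.
    - intros; rewrite !W1 by (auto; lra); reflexivity.
    - apply (dR (vr X)); auto.
    - apply (dR (vr X)); auto; lra. }
  assert (W3 : forall t r u, 0 < r -> 0 < u -> Dx [0%nat; 0%nat] t r u = 0).
  { intros t r u Hr Hu. apply (deriv_const_all (fun s => Dx [0%nat] s r u) t _ 0); try assumption.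
    - intros; apply X0z; auto.
    - apply (dT (vr X)); auto. }
  assert (W4 : forall t r u, 0 < r -> 0 < u -> Dx [2%nat; 0%nat] t r u = 0).
  { intros t r u Hr Hu. apply (deriv_const_pos (fun s => Dx [0%nat] t r s) u _ 0); try assumption.
    - intros; apply X0z; auto.
    - apply (dU (vr X)); auto. }
  assert (W5 : forall t r u, 0 < r -> 0 < u -> Dx [2%nat; 2%nat] t r u = 0).
  { intros t r u Hr Hu. apply (deriv_const_pos (fun s => Dx [2%nat] t r s) u _ 0); try assumption.
    - intros; apply X2z; auto.
    - apply (dU (vr X)); auto. }
  assert (W6 : forall t r u, 0 < r -> 0 < u -> Dx [2%nat; 1%nat] t r u = 0).
  { intros t r u Hr Hu. apply (deriv_const_pos (fun s => Dx [1%nat] t r s) u _ (x1 r)); try assumption.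
    - intros; apply W1; auto.
    - apply (dU (vr X)); auto. }
  assert (W0 : forall t r u, 0 < r -> 0 < u -> Dx nil t r u = xh r) by (intros; apply XT; auto).
  assert (S8 : forall t r u, 0 < r -> 0 < u -> De [2%nat; 2%nat] t r u = 0 /\ 2 * De [2%nat; 0%nat] t r u = t2 t).
  { intros t r u Hr Hu.
    pose proof (Hres t r u 0 0 0 0 Hr Hu) as H1. pose proof (Hres t r u 1 0 0 0 Hr Hu) as H2.
    pose proof (Hres t r u (-1) 0 0 0 Hr Hu) as H3.
    unfold prolong_residual in H1, H2, H3. cbv zeta in H1, H2, H3.
    rewrite ?T2, ?T1z, ?X2z, ?X0z, ?V1, ?V2, ?V3, ?V4, ?V5, ?V6, ?W0, ?W1, ?W2, ?W3, ?W4, ?W5, ?W6 in H1, H2, H3 by auto.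
    split; lra. }
  set (A := fun t r => De [2%nat] t r 1).
  set (At := fun t r => De [0%nat; 2%nat] t r 1). set (Ar := fun t r => De [1%nat; 2%nat] t r 1).
  set (Att := fun t r => De [0%nat; 0%nat; 2%nat] t r 1). set (Arr := fun t r => De [1%nat; 1%nat; 2%nat] t r 1).
  set (Bf := fun t r => De nil t r 1 - A t r).
  set (Bt := fun t r => De [0%nat] t r 1 - At t r). set (Br := fun t r => De [1%nat] t r 1 - Ar t r).
  set (Btt := fun t r => De [0%nat; 0%nat] t r 1 - Att t r). set (Brr := fun t r => De [1%nat; 1%nat] t r 1 - Arr t r).
  assert (EA : forall t r u, 0 < r -> 0 < u -> De [2%nat] t r u = A t r).
  { intros t r u Hr Hu. apply (const_pos (fun s => De [2%nat] t r s)); auto; [|lra].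
    intros x Hx. rewrite <- (proj1 (S8 t r x Hr Hx)). apply (dU (vu X)); auto. }
  assert (EB : forall t r u, 0 < r -> 0 < u -> De nil t r u = A t r * u + Bf t r).
  { intros t r u Hr Hu.
    assert (K : De nil t r u - A t r * u = De nil t r 1 - A t r * 1).
    { apply (const_pos (fun s => De nil t r s - A t r * s)); auto; [|lra].
      intros x Hx. apply (dpl_minus _ _ x (De [2%nat] t r x) (A t r)).
      - apply (dU (vu X)); auto.
      - apply (dpl_scal (fun y => y) (A t r) x 1); [apply derivable_pt_lim_id| ring].
      - rewrite EA by auto. ring. }
    unfold Bf. lra. }
  assert (Ve0 : forall t r u, 0 < r -> 0 < u -> De [0%nat] t r u = At t r * u + Bt t r).
  { intros t r u Hr Hu. apply (uniq_all (fun s => De nil s r u) (fun s => De [2%nat] s r 1 * u + (De nil s r 1 - De [2%nat] s r 1)) t).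
    - intros s. rewrite EB by auto. reflexivity.
    - apply (dT (vu X)); auto.
    - apply (dpl_plus _ _ t (De [0%nat; 2%nat] t r 1 * u) (De [0%nat] t r 1 - De [0%nat; 2%nat] t r 1)).
      + apply (dpl_mult _ (fun _ => u) t (De [0%nat; 2%nat] t r 1) 0); [apply (dT (vu X)); auto; lra| apply derivable_pt_lim_const| ring].
      + apply dpl_minus with (l1 := De [0%nat] t r 1) (l2 := De [0%nat; 2%nat] t r 1); [apply (dT (vu X)); auto; lra| apply (dT (vu X)); auto; lra| ring].
      + unfold Bt, At. ring. }
  assert (Ve1 : forall t r u, 0 < r -> 0 < u -> De [1%nat] t r u = Ar t r * u + Br t r).
  { intros t r u Hr Hu. apply (uniq_pos (fun s => De nil t s u) (fun s => De [2%nat] t s 1 * u + (De nil t s 1 - De [2%nat] t s 1)) r); try assumption.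
    - intros s Hs. rewrite EB by auto. reflexivity.
    - apply (dR (vu X)); auto.
    - apply (dpl_plus _ _ r (De [1%nat; 2%nat] t r 1 * u) (De [1%nat] t r 1 - De [1%nat; 2%nat] t r 1)).
      + apply (dpl_mult _ (fun _ => u) r (De [1%nat; 2%nat] t r 1) 0); [apply (dR (vu X)); auto; lra| apply derivable_pt_lim_const| ring].
      + apply dpl_minus with (l1 := De [1%nat] t r 1) (l2 := De [1%nat; 2%nat] t r 1); [apply (dR (vu X)); auto; lra| apply (dR (vu X)); auto; lra| ring].
      + unfold Br, Ar. ring. }
  assert (Ve20 : forall t r u, 0 < r -> 0 < u -> De [2%nat; 0%nat] t r u = At t r).
  { intros t r u Hr Hu. apply (uniq_pos (fun s => De [0%nat] t r s) (fun s => At t r * s + Bt t r) u); try assumption.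
    - intros s Hs. apply Ve0; auto.
    - apply (dU (vu X)); auto.
    - apply (dpl_plus _ _ u (At t r) 0); [apply (dpl_scal (fun y => y) (At t r) u 1); [apply derivable_pt_lim_id| ring]| apply derivable_pt_lim_const| ring]. }
  assert (Ve21 : forall t r u, 0 < r -> 0 < u -> De [2%nat; 1%nat] t r u = Ar t r).
  { intros t r u Hr Hu. apply (uniq_pos (fun s => De [1%nat] t r s) (fun s => Ar t r * s + Br t r) u); try assumption.
    - intros s Hs. apply Ve1; auto.
    - apply (dU (vu X)); auto.
    - apply (dpl_plus _ _ u (Ar t r) 0); [apply (dpl_scal (fun y => y) (Ar t r) u 1); [apply derivable_pt_lim_id| ring]| apply derivable_pt_lim_const| ring]. }
  assert (Ve00 : forall t r u, 0 < r -> 0 < u -> De [0%nat; 0%nat] t r u = Att t r * u + Btt t r).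
  { intros t r u Hr Hu. apply (uniq_all (fun s => De [0%nat] s r u) (fun s => De [0%nat; 2%nat] s r 1 * u + (De [0%nat] s r 1 - De [0%nat; 2%nat] s r 1)) t).
    - intros s. rewrite Ve0 by auto. reflexivity.
    - apply (dT (vu X)); auto.
    - apply (dpl_plus _ _ t (De [0%nat; 0%nat; 2%nat] t r 1 * u) (De [0%nat; 0%nat] t r 1 - De [0%nat; 0%nat; 2%nat] t r 1)).
      + apply (dpl_mult _ (fun _ => u) t (De [0%nat; 0%nat; 2%nat] t r 1) 0); [apply (dT (vu X)); auto; lra| apply derivable_pt_lim_const| ring].
      + apply dpl_minus with (l1 := De [0%nat; 0%nat] t r 1) (l2 := De [0%nat; 0%nat; 2%nat] t r 1); [apply (dT (vu X)); auto; lra| apply (dT (vu X)); auto; lra| ring].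
      + unfold Btt, Att. ring. }
  assert (Ve11 : forall t r u, 0 < r -> 0 < u -> De [1%nat; 1%nat] t r u = Arr t r * u + Brr t r).
  { intros t r u Hr Hu. apply (uniq_pos (fun s => De [1%nat] t s u) (fun s => De [1%nat; 2%nat] t s 1 * u + (De [1%nat] t s 1 - De [1%nat; 2%nat] t s 1)) r); try assumption.
    - intros s Hs. rewrite Ve1 by auto. reflexivity.
    - apply (dR (vu X)); auto.
    - apply (dpl_plus _ _ r (De [1%nat; 1%nat; 2%nat] t r 1 * u) (De [1%nat; 1%nat] t r 1 - De [1%nat; 1%nat; 2%nat] t r 1)).
      + apply (dpl_mult _ (fun _ => u) r (De [1%nat; 1%nat; 2%nat] t r 1) 0); [apply (dR (vu X)); auto; lra| apply derivable_pt_lim_const| ring].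
      + apply dpl_minus with (l1 := De [1%nat; 1%nat] t r 1) (l2 := De [1%nat; 1%nat; 2%nat] t r 1); [apply (dR (vu X)); auto; lra| apply (dR (vu X)); auto; lra| ring].
      + unfold Brr, Arr. ring. }
  assert (Ve22 : forall t r u, 0 < r -> 0 < u -> De [2%nat; 2%nat] t r u = 0) by (intros; apply S8; auto).
  assert (AtE : forall t r, 0 < r -> 2 * At t r = t2 t).
  { intros t r Hr. rewrite <- (Ve20 t r 1) by lra. apply S8; auto; lra. }
  assert (S10 : forall t r u, 0 < r -> 0 < u ->
    (A t r - 2 * t1 t) * (c + b * Rpower u p) - b * p * Rpower u (p - 1) * (A t r * u + Bf t r)
      - (c + b * Rpower u p) * (A t r - 2 * x1 r) = 0 /\
    (A t r - 2 * t1 t) * (c + b * Rpower u p) * ((n - 1) / r)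
      - b * p * Rpower u (p - 1) * (A t r * u + Bf t r) * ((n - 1) / r)
      - (c + b * Rpower u p) * (2 * Ar t r - x2 r + (n - 1) / r * (A t r - x1 r) - (n - 1) / r ^ 2 * xh r)
      - 2 * a * Rpower u (p - 1) * (Ar t r * u + Br t r) = 0 /\
    (Att t r * u + Btt t r) - (c + b * Rpower u p) * ((Arr t r * u + Brr t r) + (n - 1) / r * (Ar t r * u + Br t r)) = 0).
  { intros t r u Hr Hu.
    pose proof (Hres t r u 0 0 0 0 Hr Hu) as H1. pose proof (Hres t r u 0 0 0 1 Hr Hu) as H2.
    pose proof (Hres t r u 0 1 0 0 Hr Hu) as H3. pose proof (Hres t r u 0 (-1) 0 0 Hr Hu) as H4.
    unfold prolong_residual in H1, H2, H3, H4. cbv zeta in H1, H2, H3, H4.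
    rewrite ?T2, ?T1z, ?X2z, ?X0z, ?V1, ?V2, ?V3, ?V4, ?V5, ?V6, ?W0, ?W1, ?W2, ?W3, ?W4, ?W5, ?W6 in H1, H2, H3, H4 by auto.
    rewrite ?EB, ?Ve0, ?Ve1, ?EA, ?Ve20, ?Ve21, ?Ve00, ?Ve11, ?Ve22 in H1, H2, H3, H4 by auto.
    split; [|split]; lra. }
  assert (Hx1 : forall r, 0 < r -> derivable_pt_lim x1 r (x2 r)).
  { intros r Hr. apply (dR (vr X) Dx [1%nat] 0 r 1); auto; lra. }
  assert (Hx2 : forall r, 0 < r -> derivable_pt_lim x2 r (x3 r)).
  { intros r Hr. apply (dR (vr X) Dx [1%nat; 1%nat] 0 r 1); auto; lra. }
  assert (Hxh : forall r, 0 < r -> derivable_pt_lim xh r (x1 r)).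
  { intros r Hr. apply (dR (vr X) Dx nil 0 r 1); auto; lra. }
  assert (Ht1 : forall t, derivable_pt_lim t1 t (t2 t)).
  { intros t. apply (dT (vt X) Dt [0%nat] t 1 1); auto; lra. }
  assert (Ht2 : forall t, derivable_pt_lim t2 t (t3 t)).
  { intros t. apply (dT (vt X) Dt [0%nat; 0%nat] t 1 1); auto; lra. }
  assert (Hth : forall t, derivable_pt_lim th t (t1 t)).
  { intros t. apply (dT (vt X) Dt nil t 1 1); auto; lra. }
  assert (S11 : forall t r, 0 < r -> p * A t r = 2 * x1 r - 2 * t1 t /\
      (p <> 1 -> Bf t r = 0 /\ c * (2 * x1 r - 2 * t1 t) = 0) /\
      (p = 1 -> c * (2 * x1 r - 2 * t1 t) = b * Bf t r)).
  { intros t r Hr.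
    destruct (sep3 p (c * (2 * x1 r - 2 * t1 t)) (b * (2 * x1 r - 2 * t1 t) - b * p * A t r) (- (b * p * Bf t r)) hp)
      as [K1 [K2 K3]].
    { intros u Hu. destruct (S10 t r u Hr Hu) as [E1 _]. rewrite (W_eq u p Hu) in E1. lra. }
    split; [|split].
    - apply (Rmult_eq_reg_l b); auto. lra.
    - intros Hp1. destruct (K2 Hp1) as [K4 K5]. split; auto.
      assert (b * p * Bf t r = 0) by lra. destruct (Rmult_integral _ _ H) as [H'|H']; auto.
      destruct (Rmult_integral _ _ H'); contradiction.
    - intros Hp1. specialize (K3 Hp1). subst p. lra. }
  assert (S12 : forall t r, 0 < r ->
      b * (x2 r - (n - 1) / r * x1 r + (n - 1) / r ^ 2 * xh r - 2 * Ar t r) = 2 * a * Ar t r).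
  { intros t r Hr.
    destruct (sep3 p (c * (x2 r - (n - 1) / r * x1 r + (n - 1) / r ^ 2 * xh r - 2 * Ar t r))
       (b * (x2 r - (n - 1) / r * x1 r + (n - 1) / r ^ 2 * xh r - 2 * Ar t r) - 2 * a * Ar t r)
       (- (2 * a * Br t r)) hp) as [K1 _].
    { intros u Hu. destruct (S10 t r u Hr Hu) as [E1 [E3 _]].
      match type of E1 with ?L = 0 => assert (K : (n - 1) / r * L = 0) by (rewrite E1; ring) end.
      rewrite (W_eq u p Hu) in E3, K. lra. }
    lra. }
  assert (BtD : forall t r, 0 < r -> derivable_pt_lim (fun s => Bf s r) t (Bt t r)).
  { intros t r Hr. unfold Bf, Bt, A, At.
    apply dpl_minus with (l1 := De [0%nat] t r 1) (l2 := De [0%nat; 2%nat] t r 1); [apply (dT (vu X)); auto; lra| apply (dT (vu X)); auto; lra| ring]. }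
  assert (BttD : forall t r, 0 < r -> derivable_pt_lim (fun s => Bt s r) t (Btt t r)).
  { intros t r Hr. unfold Bt, Btt, At, Att.
    apply dpl_minus with (l1 := De [0%nat; 0%nat] t r 1) (l2 := De [0%nat; 0%nat; 2%nat] t r 1); [apply (dT (vu X)); auto; lra| apply (dT (vu X)); auto; lra| ring]. }
  assert (BrD : forall t r, 0 < r -> derivable_pt_lim (fun s => Bf t s) r (Br t r)).
  { intros t r Hr. unfold Bf, Br, A, Ar.
    apply dpl_minus with (l1 := De [1%nat] t r 1) (l2 := De [1%nat; 2%nat] t r 1); [apply (dR (vu X)); auto; lra| apply (dR (vu X)); auto; lra| ring]. }
  assert (BrrD : forall t r, 0 < r -> derivable_pt_lim (fun s => Br t s) r (Brr t r)).
  { intros t r Hr. unfold Br, Brr, Ar, Arr.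
    apply dpl_minus with (l1 := De [1%nat; 1%nat] t r 1) (l2 := De [1%nat; 1%nat; 2%nat] t r 1); [apply (dR (vu X)); auto; lra| apply (dR (vu X)); auto; lra| ring]. }
  assert (S13 : forall t r, 0 < r -> Arr t r + (n - 1) / r * Ar t r = 0 /\ (p <> 1 -> Att t r = 0)).
  { intros t r Hr. destruct (Req_dec p 1) as [Hp1|Hp1].
    - subst p. destruct (quad_zero (Btt t r - c * (Brr t r + (n - 1) / r * Br t r))
         (Att t r - c * (Arr t r + (n - 1) / r * Ar t r) - b * (Brr t r + (n - 1) / r * Br t r))
         (- b * (Arr t r + (n - 1) / r * Ar t r))) as [K1 _].
      { intros u Hu. destruct (S10 t r u Hr Hu) as [_ [_ E4]]. rewrite Rpower_1 in E4 by auto. simpl. lra. }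
      split; [|intro; contradiction].
      assert (b * (Arr t r + (n - 1) / r * Ar t r) = 0) by lra.
      destruct (Rmult_integral _ _ H); [contradiction| auto].
    - assert (B0 : forall t r, 0 < r -> Bf t r = 0) by (intros; apply S11; auto).
      assert (Bt0 : forall t r, 0 < r -> Bt t r = 0).
      { intros t0 r0 Hr0. apply (deriv_const_all (fun s => Bf s r0) t0 _ 0); [intros; apply B0; auto| apply BtD; auto]. }
      assert (Btt0 : Btt t r = 0).
      { apply (deriv_const_all (fun s => Bt s r) t _ 0); [intros; apply Bt0; auto| apply BttD; auto]. }
      assert (Br0 : forall t r, 0 < r -> Br t r = 0).
      { intros t0 r0 Hr0. apply (deriv_const_pos (fun s => Bf t0 s) r0 _ 0); [intros; apply B0; auto| exact Hr0| apply BrD; auto]. }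
      assert (Brr0 : Brr t r = 0).
      { apply (deriv_const_pos (fun s => Br t s) r _ 0); [intros; apply Br0; auto| exact Hr| apply BrrD; auto]. }
      destruct (sep3 p (Att t r - c * (Arr t r + (n - 1) / r * Ar t r)) (- b * (Arr t r + (n - 1) / r * Ar t r)) 0 hp)
        as [K1 [K2 _]].
      { intros u Hu. destruct (S10 t r u Hr Hu) as [_ [_ E4]].
        rewrite Btt0, Brr0, Br0 in E4 by auto. rewrite (W_eq u p Hu) in E4.
        match goal with |- ?G = 0 => match type of E4 with ?L = 0 =>
          assert (Q : u * G = L) by ring end end.
        apply (Rmult_eq_reg_l u); [rewrite Q, E4; ring| lra]. }
      assert (LA : Arr t r + (n - 1) / r * Ar t r = 0).
      { assert (b * (Arr t r + (n - 1) / r * Ar t r) = 0) by lra.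
        destruct (Rmult_integral _ _ H); [contradiction| auto]. }
      split; auto. intros _. destruct (K2 Hp1). rewrite LA in H. lra. }
  assert (ArE : forall t r, 0 < r -> Ar t r = 2 * x2 r / p).
  { intros t r Hr. apply (uniq_pos (fun s => A t s) (fun s => / p * (2 * x1 s - 2 * t1 t)) r); [| exact Hr| |].
    - intros s Hs. destruct (S11 t s Hs) as [K _]. rewrite <- K. field. auto.
    - unfold A, Ar. apply (dR (vu X)); auto; lra.
    - apply (dpl_scal _ (/ p) r (2 * x2 r - 0)); [|unfold Rdiv; ring].
      apply (dpl_minus _ _ r (2 * x2 r) 0); [apply dpl_scal with (l1 := x2 r); [apply Hx1; auto| ring]| apply derivable_pt_lim_const| ring]. }
  assert (ArrE : forall t r, 0 < r -> Arr t r = 2 * x3 r / p).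
  { intros t r Hr. apply (uniq_pos (fun s => Ar t s) (fun s => / p * (2 * x2 s)) r); [| exact Hr| |].
    - intros s Hs. rewrite ArE by auto. unfold Rdiv. ring.
    - unfold Ar, Arr. apply (dR (vu X)); auto; lra.
    - apply (dpl_scal _ (/ p) r (2 * x3 r)); [|unfold Rdiv; ring].
      apply dpl_scal with (l1 := x3 r); [apply Hx2; auto| ring]. }
  assert (AtE2 : forall t r, 0 < r -> At t r = - 2 * t2 t / p).
  { intros t r Hr. apply (uniq_all (fun s => A s r) (fun s => / p * (2 * x1 r - 2 * t1 s)) t).
    - intros s. destruct (S11 s r Hr) as [K _]. rewrite <- K. field. auto.
    - unfold A, At. apply (dT (vu X)); auto; lra.
    - apply (dpl_scal _ (/ p) t (0 - 2 * t2 t)); [|unfold Rdiv; ring].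
      apply (dpl_minus _ _ t 0 (2 * t2 t)); [apply derivable_pt_lim_const| apply dpl_scal with (l1 := t2 t); [apply Ht1| ring]| ring]. }
  assert (AttE : forall t r, 0 < r -> Att t r = - 2 * t3 t / p).
  { intros t r Hr. apply (uniq_all (fun s => At s r) (fun s => / p * (- 2 * t2 s)) t).
    - intros s. rewrite AtE2 by auto. unfold Rdiv. ring.
    - unfold At, Att. apply (dT (vu X)); auto; lra.
    - apply (dpl_scal _ (/ p) t (- 2 * t3 t)); [|unfold Rdiv; ring].
      apply dpl_scal with (l1 := t3 t); [apply Ht2| ring]. }
  assert (T2p : forall t, t2 t * (p + 4) = 0).
  { intros t. pose proof (AtE 0 1 ltac:(lra)) as K. pose proof (AtE2 t 1 ltac:(lra)) as K2.
    pose proof (AtE t 1 ltac:(lra)) as K3. rewrite K2 in K3.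
    assert (E : t2 t * (p + 4) = p * (t2 t - 2 * (-2 * t2 t / p))) by (field; auto).
    rewrite E, K3. ring. }
  assert (T2c : forall t, t2 t = t2 0).
  { destruct (Req_dec p 1) as [Hp1|Hp1].
    - intros t. pose proof (T2p t). pose proof (T2p 0). rewrite Hp1 in *. lra.
    - intros t. apply (const_all t2). intros x.
      assert (Z : t3 x = 0).
      { destruct (S13 x 1 ltac:(lra)) as [_ K]. specialize (K Hp1). rewrite AttE in K by lra.
        apply (Rmult_eq_reg_l (- 2 / p)).
        { assert (E : - 2 / p * t3 x = - 2 * t3 x / p) by (unfold Rdiv; ring). rewrite E, K. ring. }
        unfold Rdiv. apply Rmult_integral_contrapositive; split; [lra| apply Rinv_neq_0_compat; auto]. }
      rewrite <- Z. apply Ht2. }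
  exists th, t1, t2, xh, x1, x2, x3, A, Bf.
  split; [|split; [|split; [|split; [|split; [|split]]]]].
  - intros t r u Hr Hu. destruct HDt as [Et _]. destruct HDx as [Ex _]. destruct HDe as [Ee _].
    rewrite <- Et, <- Ex, <- Ee. split; [apply TR; auto| split; [apply W0; auto| apply EB; auto]].
  - intros t. split; [apply Hth| split; [apply Ht1| apply T2c]].
  - apply T2p.
  - intros r Hr. split; [apply Hxh; auto| split; [apply Hx1; auto| split; [apply Hx2; auto|]]].
    destruct (S13 0 r Hr) as [K _]. rewrite ArE, ArrE in K by auto.
    apply (Rmult_eq_reg_l (2 / p)).
    { match type of K with ?L = 0 => assert (E : 2 / p * (x3 r + (n - 1) / r * x2 r) = L) by (field; lra) end.
      rewrite E, K. ring. }
    unfold Rdiv. apply Rmult_integral_contrapositive; split; [lra| apply Rinv_neq_0_compat; auto].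
  - intros t r Hr. apply S11; auto.
  - intros t r Hr. destruct (S11 t r Hr) as [_ [K1 K2]]. split; auto.
  - intros r Hr. pose proof (S12 0 r Hr) as K. rewrite ArE in K by auto.
    replace (4 * x2 r / p) with (2 * (2 * x2 r / p)) by (unfold Rdiv; ring).
    replace (4 * a * x2 r / p) with (2 * a * (2 * x2 r / p)) by (unfold Rdiv; ring). exact K.
Qed.

Lemma finish_common a b c p n (hp : p <> 0) (hb : b <> 0) X (th t1 xh x1 Ph Ph1 : R -> R) (A B : R -> R -> R)
  t0 ka si C D k4 k5 :
  (forall t r u, 0 < r -> 0 < u -> vt X t r u = th t /\ vr X t r u = xh r /\ vu X t r u = A t r * u + B t r) ->
  (forall t, th t = t0 + ka * t + si * t ^ 2 /\ t1 t = ka + 2 * si * t) ->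
  si * (p + 4) = 0 ->
  (forall r, 0 < r -> xh r = C * Ph r + D * r /\ x1 r = C * Ph1 r + D) ->
  (forall t r, 0 < r -> p * A t r = 2 * x1 r - 2 * t1 t) ->
  (forall t r, 0 < r -> (p <> 1 -> B t r = 0 /\ c * (2 * x1 r - 2 * t1 t) = 0) /\
                        (p = 1 -> c * (2 * x1 r - 2 * t1 t) = b * B t r)) ->
  (c * (p - 1) <> 0 -> C = 0 /\ si = 0) ->
  (~ cond4 a b c p n -> k4 = 0) -> (~ cond5 a b c p n -> k5 = 0) ->
  (forall r, 0 < r -> C * Ph r = k4 * (a + b + (1 - p) * c) * Rpower r (3 - n) + k5 * (/ 2 * p * b) * r * ln r) ->
  (c * (p - 1) = 0 -> forall r, 0 < r ->
     2 * C * Ph1 r / (p * b) = k4 * (2 - n) * Rpower r (2 - n) + k5 * (1 + ln r)) ->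
  exists k1 k2 k3 k4 k5 k6 : R,
       (~ cond3 c p -> k3 = 0) /\ (~ cond4 a b c p n -> k4 = 0) /\
       (~ cond5 a b c p n -> k5 = 0) /\ (~ cond6 c p -> k6 = 0) /\
       vf_eq X (vf_add (vf_scale k1 X1) (vf_add (vf_scale k2 X2)
               (vf_add (vf_scale k3 (X3 b c p)) (vf_add (vf_scale k4 (X4 a b c p n))
               (vf_add (vf_scale k5 (X5 b c p)) (vf_scale k6 X6)))))).
Proof.
  intros H1 Hth Hsi Hxh HA HB HC0 Hk4 Hk5 HPh HPh1.
  destruct (Req_dec (c * (p - 1)) 0) as [c3|c3].
  -
    assert (Bc : forall t r, 0 < r -> B t r = c * A t r / b).
    { intros t r Hr. destruct (HB t r Hr) as [K1 K2]. destruct (Req_dec p 1) as [Hp1|Hp1].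
      - specialize (K2 Hp1). rewrite Hp1 in HA. specialize (HA t r Hr).
        apply (Rmult_eq_reg_l b); auto. rewrite <- K2, <- HA. field. auto.
      - destruct (K1 Hp1) as [K3 _]. rewrite K3.
        assert (c = 0) by (destruct (Rmult_integral _ _ c3); [auto| lra]). subst c. field; auto. }
    assert (si0 : si <> 0 -> c = 0 /\ p = -4).
    { intros Hs. assert (p = -4) by (destruct (Rmult_integral _ _ Hsi); [contradiction| lra]).
      split; auto. destruct (Rmult_integral _ _ c3); [auto| lra]. }
    exists t0, ka, (2 * (D - ka) / (p * b)), k4, k5, si.
    split; [intro H; exfalso; apply H; exact c3|].
    split; [auto| split; [auto|]].
    split; [intro H; destruct (Req_dec si 0) as [E|E]; [auto| exfalso; apply H; apply si0; auto]|].
    intros t r u Hr Hu. destruct (H1 t r u Hr Hu) as [E1 [E2 E3]]. destruct (Hth t) as [F1 F2].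
    destruct (Hxh r Hr) as [G1 G2]. simpl.
    split; [|split].
    + rewrite E1, F1. ring.
    + rewrite E2, G1. rewrite HPh by auto. field. auto.
    + rewrite E3, Bc by auto.
      assert (AE : A t r = (2 * x1 r - 2 * t1 t) / p) by (rewrite <- HA by auto; field; auto).
      rewrite AE, G2, F2.
      assert (PE : C * Ph1 r = (p * b) / 2 * (k4 * (2 - n) * Rpower r (2 - n) + k5 * (1 + ln r))).
      { rewrite <- HPh1 by auto. field. auto. }
      assert (Cc : (1 - p) * c = 0) by lra.
      rewrite Cc.
      destruct (Req_dec si 0) as [Es|Es].
      * subst si. replace (2 * (C * Ph1 r + D) - 2 * (ka + 2 * 0 * t))
          with (2 * (C * Ph1 r) + 2 * D - 2 * ka) by ring. rewrite PE.
        destruct (Req_dec p 1) as [Hp1|Hp1].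
        -- subst p. field. auto.
        -- assert (c = 0) by (destruct (Rmult_integral _ _ c3); [auto| lra]). subst c. field. auto.
      * destruct (si0 Es) as [-> ->].
        replace (2 * (C * Ph1 r + D) - 2 * (ka + 2 * si * t))
          with (2 * (C * Ph1 r) + 2 * D - 2 * ka - 4 * si * t) by ring. rewrite PE. field. auto.
  -
    destruct (HC0 c3) as [C0 si0]. subst C si.
    assert (k40 : k4 = 0) by (apply Hk4; intros [K _]; contradiction).
    assert (k50 : k5 = 0) by (apply Hk5; intros [K _]; contradiction).
    assert (p1 : p <> 1) by (intro; subst; apply c3; ring).
    assert (Dk : D = ka).
    { destruct (HB 0 1 ltac:(lra)) as [K _]. destruct (K p1) as [_ K2].
      destruct (Rmult_integral _ _ K2) as [K3|K3]; [exfalso; apply c3; rewrite K3; ring|].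
      destruct (Hxh 1 ltac:(lra)) as [_ G2]. destruct (Hth 0) as [_ F2]. lra. }
    subst D.
    exists t0, ka, 0, 0, 0, 0.
    split; [auto| split; [auto| split; [auto| split; [auto|]]]].
    intros t r u Hr Hu. destruct (H1 t r u Hr Hu) as [E1 [E2 E3]]. destruct (Hth t) as [F1 F2].
    destruct (Hxh r Hr) as [G1 G2]. simpl.
    split; [|split].
    + rewrite E1, F1. ring.
    + rewrite E2, G1. ring.
    + rewrite E3. destruct (HB t r Hr) as [K _]. destruct (K p1) as [K1 K2].
      destruct (Rmult_integral _ _ K2) as [K3|K3]; [exfalso; apply c3; rewrite K3; ring|].
      specialize (HA t r Hr). rewrite K3 in HA.
      assert (A t r = 0) by (destruct (Rmult_integral _ _ HA); [contradiction| auto]).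
      rewrite H, K1. ring.
Qed.

Lemma two_point K1 K2 q : K1 + K2 = 0 -> K1 * q + K2 = 0 -> q <> 1 -> K1 = 0 /\ K2 = 0.
Proof.
  intros E1 E2 Hq. assert (K1 * (q - 1) = 0) by lra.
  destruct (Rmult_integral _ _ H); [split; lra| lra].
Qed.

Lemma Rpower_ne1 r x : 1 < r -> x <> 0 -> Rpower r x <> 1.
Proof.
  intros Hr Hx E. rewrite <- (Rpower_O r) in E by lra. unfold Rpower in E. apply exp_inv in E.
  rewrite Rmult_0_l in E. apply Rmult_integral in E. destruct E as [E|E]; [auto|].
  rewrite <- ln_1 in E. apply ln_inv in E; lra.
Qed.

Lemma forward a b c p n X (hn : n <> 1) (hp : p <> 0) (hb : b <> 0) :
  point_symmetry a b c p n X ->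
  exists k1 k2 k3 k4 k5 k6 : R,
       (~ cond3 c p -> k3 = 0) /\ (~ cond4 a b c p n -> k4 = 0) /\
       (~ cond5 a b c p n -> k5 = 0) /\ (~ cond6 c p -> k6 = 0) /\
       vf_eq X (vf_add (vf_scale k1 X1) (vf_add (vf_scale k2 X2)
               (vf_add (vf_scale k3 (X3 b c p)) (vf_add (vf_scale k4 (X4 a b c p n))
               (vf_add (vf_scale k5 (X5 b c p)) (vf_scale k6 X6)))))).
Proof.
  intros HS.
  destruct (analysis a b c p n X hn hp hb HS)
    as [th [t1 [t2 [xh [x1 [x2 [x3 [A [B [H1 [Ht [Ht2p [Hx [HA [HB H6]]]]]]]]]]]]]]].
  destruct (tau_solve th t1 t2) as [t0 [ka [si Hts]]].
  { intros t; apply Ht. } { intros t; apply Ht. } { intros t; apply Ht. }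
  assert (Hsi : si * (p + 4) = 0).
  { destruct (Hts 0) as [_ [_ K]]. rewrite K in Ht2p. lra. }
  set (C := x2 1).
  assert (HC : forall r, 0 < r -> x2 r = C * Rpower r (1 - n)).
  { apply (xi_solve1 n x2 x3); intros r Hr; apply Hx; auto. }
  assert (Hth : forall t, th t = t0 + ka * t + si * t ^ 2 /\ t1 t = ka + 2 * si * t).
  { intros t; destruct (Hts t) as [K1 [K2 _]]; auto. }
  assert (HC0 : c * (p - 1) <> 0 -> C = 0 /\ si = 0).
  { intros c3. assert (p1 : p <> 1) by (intro; subst; apply c3; ring).
    assert (Hc : c <> 0) by (intro; subst; apply c3; ring).
    assert (L : forall t r, 0 < r -> x1 r = t1 t).
    { intros t r Hr. destruct (HB t r Hr) as [K _]. destruct (K p1) as [_ K2].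
      destruct (Rmult_integral _ _ K2); [contradiction| lra]. }
    split.
    - unfold C. apply (deriv_const_pos x1 1 _ (t1 0)); [intros; apply L; auto| lra| apply Hx; lra].
    - pose proof (L 0 1 ltac:(lra)). pose proof (L 1 1 ltac:(lra)).
      destruct (Hth 0) as [_ F0]. destruct (Hth 1) as [_ F1]. lra. }
  assert (Hx1 : forall r, 0 < r -> derivable_pt_lim x1 r (x2 r)) by (intros; apply Hx; auto).
  assert (Hxh : forall r, 0 < r -> derivable_pt_lim xh r (x1 r)) by (intros; apply Hx; auto).
  destruct (Req_dec n 2) as [n2|n2]; [|destruct (Req_dec n 3) as [n3|n3]].
  -
    subst n.
    set (Ph1 := fun r => 1 + ln r). set (Ph := fun r => r * ln r).
    assert (D1 : forall r, 0 < r -> derivable_pt_lim Ph1 r (Rpower r (1 - 2))).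
    { intros r Hr. replace (1 - 2) with (-1) by ring. rewrite Rpm1 by auto.
      apply (dpl_plus _ _ r 0 (/ r)); [apply derivable_pt_lim_const| apply derivable_pt_lim_ln; auto| ring]. }
    assert (D0 : forall r, 0 < r -> derivable_pt_lim Ph r (Ph1 r)).
    { intros r Hr. apply (dpl_mult (fun y => y) ln r 1 (/ r)); [apply derivable_pt_lim_id| apply derivable_pt_lim_ln; auto|].
      unfold Ph1. field. lra. }
    set (D := x1 1 - C * Ph1 1).
    assert (E1 : forall r, 0 < r -> x1 r = C * Ph1 r + D).
    { intros r Hr. apply (integ x1 x2 Ph1 (fun r => Rpower r (1 - 2)) C); auto. }
    set (E := xh 1 - 1 * (C * Ph 1 + D * 1)).
    assert (E0 : forall r, 0 < r -> xh r = C * Ph r + D * r + E).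
    { intros r Hr.
      assert (GD : forall s, 0 < s -> derivable_pt_lim (fun r => C * Ph r + D * r) s (C * Ph1 s + D)).
      { intros s Hs. apply (dpl_plus _ _ s (C * Ph1 s) (D * 1)); [apply dpl_scal with (l1 := Ph1 s); [apply D0; auto| ring]| apply dpl_scal with (l1 := 1); [apply derivable_pt_lim_id| ring]| ring]. }
      assert (GE : forall s, 0 < s -> x1 s = 1 * (C * Ph1 s + D)) by (intros s Hs; rewrite E1 by auto; ring).
      rewrite (integ xh x1 (fun r => C * Ph r + D * r) (fun r => C * Ph1 r + D) 1 Hxh GD GE r Hr).
      unfold E. ring. }
    assert (Q : forall r, 0 < r -> p * b * E - 4 * (a + b) * C * r = 0).
    { intros r Hr. pose proof (H6 r Hr) as K. rewrite HC, E1, E0 in K by auto.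
      replace (1 - 2) with (-1) in K by ring. rewrite Rpm1 in K by auto. unfold Ph1, Ph in K.
      match type of K with ?L = ?R =>
        assert (Z : p * b * E - 4 * (a + b) * C * r = p * r ^ 2 * (L - R)) by (field; lra) end.
      rewrite Z, K. ring. }
    destruct (two_point (- 4 * (a + b) * C) (p * b * E) 2) as [Q1 Q2].
    { pose proof (Q 1 ltac:(lra)). lra. } { pose proof (Q 2 ltac:(lra)). lra. } { lra. }
    assert (E00 : E = 0).
    { destruct (Rmult_integral _ _ Q2) as [K|K]; [destruct (Rmult_integral _ _ K); contradiction| auto]. }
    apply (finish_common a b c p 2 hp hb X th t1 xh x1 Ph Ph1 A B t0 ka si C D 0 (2 * C / (p * b))); auto.
    + intros r Hr. rewrite E0, E1 by auto. rewrite E00. split; ring.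
    + intros Hc5. destruct (Req_dec C 0) as [Z|Z]; [rewrite Z; unfold Rdiv; ring|].
      exfalso. apply Hc5. split; [|split; auto].
      * destruct (Req_dec (c * (p - 1)) 0); auto. exfalso. apply Z, HC0; auto.
      * assert (a + b = 0).
        { assert (Hab : (a + b) * C = 0) by lra. destruct (Rmult_integral _ _ Hab); [auto| contradiction]. }
        lra.
    + intros r Hr. unfold Ph. field. auto.
    + intros _ r Hr. unfold Ph1. field. auto.
  -
    subst n.
    set (Ph1 := fun r => -1 * Rpower r (-1)). set (Ph := fun r => -1 * ln r).
    assert (D1 : forall r, 0 < r -> derivable_pt_lim Ph1 r (Rpower r (1 - 3))).
    { intros r Hr. apply (dpl_scal (fun y => Rpower y (-1)) (-1) r ((-1) * Rpower r (-1 - 1))).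
      - apply derivable_pt_lim_power; auto.
      - replace (1 - 3) with (-1 - 1) by ring. ring. }
    assert (D0 : forall r, 0 < r -> derivable_pt_lim Ph r (Ph1 r)).
    { intros r Hr. apply (dpl_scal ln (-1) r (/ r)); [apply derivable_pt_lim_ln; auto|].
      unfold Ph1. rewrite Rpm1 by auto. ring. }
    set (D := x1 1 - C * Ph1 1).
    assert (E1 : forall r, 0 < r -> x1 r = C * Ph1 r + D).
    { intros r Hr. apply (integ x1 x2 Ph1 (fun r => Rpower r (1 - 3)) C); auto. }
    set (E := xh 1 - 1 * (C * Ph 1 + D * 1)).
    assert (E0 : forall r, 0 < r -> xh r = C * Ph r + D * r + E).
    { intros r Hr.
      assert (GD : forall s, 0 < s -> derivable_pt_lim (fun r => C * Ph r + D * r) s (C * Ph1 s + D)).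
      { intros s Hs. apply (dpl_plus _ _ s (C * Ph1 s) (D * 1)); [apply dpl_scal with (l1 := Ph1 s); [apply D0; auto| ring]| apply dpl_scal with (l1 := 1); [apply derivable_pt_lim_id| ring]| ring]. }
      assert (GE : forall s, 0 < s -> x1 s = 1 * (C * Ph1 s + D)) by (intros s Hs; rewrite E1 by auto; ring).
      rewrite (integ xh x1 (fun r => C * Ph r + D * r) (fun r => C * Ph1 r + D) 1 Hxh GD GE r Hr).
      unfold E. ring. }
    assert (Q : forall r, 0 < r -> p * b * (3 * C - 2 * C * ln r + 2 * E) - 4 * (a + b) * C = 0).
    { intros r Hr. pose proof (H6 r Hr) as K. rewrite HC, E1, E0 in K by auto.
      replace (1 - 3) with (-1 - 1) in K by ring. rewrite Rpower_m1, Rpm1 in K by auto. unfold Ph1, Ph in K.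
      rewrite Rpm1 in K by auto.
      match type of K with ?L = ?R =>
        assert (Z : p * b * (3 * C - 2 * C * ln r + 2 * E) - 4 * (a + b) * C = p * r ^ 2 * (L - R)) by (field; lra) end.
      rewrite Z, K. ring. }
    pose proof (Q 1 ltac:(lra)) as Q1. pose proof (Q (exp 1) ltac:(apply exp_pos)) as Q2.
    rewrite ln_1 in Q1. rewrite ln_exp in Q2.
    assert (C0 : C = 0).
    { assert (p * b * C = 0) by lra. destruct (Rmult_integral _ _ H) as [K|K]; auto.
      destruct (Rmult_integral _ _ K); contradiction. }
    assert (E00 : E = 0).
    { rewrite C0 in Q1. assert (p * b * E = 0) by lra. destruct (Rmult_integral _ _ H) as [K|K]; auto.
      destruct (Rmult_integral _ _ K); contradiction. }
    apply (finish_common a b c p 3 hp hb X th t1 xh x1 Ph Ph1 A B t0 ka si C D 0 0); auto.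
    + intros r Hr. rewrite E0, E1 by auto. rewrite E00. split; ring.
    + intros r Hr. rewrite C0. ring.
    + intros _ r Hr. rewrite C0. unfold Rdiv. ring.
  -
    set (Ph1 := fun r => / (2 - n) * Rpower r (2 - n)).
    set (Ph := fun r => / ((2 - n) * (3 - n)) * Rpower r (3 - n)).
    assert (n2' : 2 - n <> 0) by lra. assert (n3' : 3 - n <> 0) by lra.
    assert (D1 : forall r, 0 < r -> derivable_pt_lim Ph1 r (Rpower r (1 - n))).
    { intros r Hr. apply (dpl_scal (fun y => Rpower y (2 - n)) (/ (2 - n)) r ((2 - n) * Rpower r (2 - n - 1))).
      - apply derivable_pt_lim_power; auto.
      - replace (2 - n - 1) with (1 - n) by ring. field. auto. }
    assert (D0 : forall r, 0 < r -> derivable_pt_lim Ph r (Ph1 r)).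
    { intros r Hr. apply (dpl_scal (fun y => Rpower y (3 - n)) _ r ((3 - n) * Rpower r (3 - n - 1))).
      - apply derivable_pt_lim_power; auto.
      - unfold Ph1. replace (3 - n - 1) with (2 - n) by ring. field. auto. }
    set (D := x1 1 - C * Ph1 1).
    assert (E1 : forall r, 0 < r -> x1 r = C * Ph1 r + D).
    { intros r Hr. apply (integ x1 x2 Ph1 (fun r => Rpower r (1 - n)) C); auto. }
    set (E := xh 1 - 1 * (C * Ph 1 + D * 1)).
    assert (E0 : forall r, 0 < r -> xh r = C * Ph r + D * r + E).
    { intros r Hr.
      assert (GD : forall s, 0 < s -> derivable_pt_lim (fun r => C * Ph r + D * r) s (C * Ph1 s + D)).
      { intros s Hs. apply (dpl_plus _ _ s (C * Ph1 s) (D * 1)); [apply dpl_scal with (l1 := Ph1 s); [apply D0; auto| ring]| apply dpl_scal with (l1 := 1); [apply derivable_pt_lim_id| ring]| ring]. }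
      assert (GE : forall s, 0 < s -> x1 s = 1 * (C * Ph1 s + D)) by (intros s Hs; rewrite E1 by auto; ring).
      rewrite (integ xh x1 (fun r => C * Ph r + D * r) (fun r => C * Ph1 r + D) 1 Hxh GD GE r Hr).
      unfold E. ring. }
    set (K1 := C * (2 * p * b * (n - 2) / (n - 3) - 4 * (a + b))).
    set (K2 := p * b * (n - 1) * E).
    assert (Q : forall r, 0 < r -> K1 * Rpower r (3 - n) + K2 = 0).
    { intros r Hr. pose proof (H6 r Hr) as K. rewrite HC, E1, E0 in K by auto. unfold Ph1, Ph in K.
      replace (1 - n) with ((3 - n) - 1 - 1) in K by ring.
      replace (2 - n) with ((3 - n) - 1) in K by ring.
      rewrite !Rpower_m1 in K by auto.
      match type of K with ?L = ?R =>
        assert (Z : K1 * Rpower r (3 - n) + K2 = p * r ^ 2 * (L - R)) end.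
      { unfold K1, K2. replace ((3 - n) - 1) with (2 - n) by ring. field. repeat split; lra. }
      rewrite Z, K. ring. }
    destruct (two_point K1 K2 (Rpower 2 (3 - n))) as [Q1 Q2].
    { pose proof (Q 1 ltac:(lra)). rewrite Rpower_1_base in H. lra. }
    { apply Q; lra. }
    { apply Rpower_ne1; lra. }
    assert (E00 : E = 0).
    { unfold K2 in Q2. destruct (Rmult_integral _ _ Q2) as [K|K]; auto.
      destruct (Rmult_integral _ _ K) as [K'|K']; [|lra]. destruct (Rmult_integral _ _ K'); contradiction. }
    destruct (Req_dec C 0) as [C0|C0].
    + apply (finish_common a b c p n hp hb X th t1 xh x1 Ph Ph1 A B t0 ka si C D 0 0); auto.
      * intros r Hr. rewrite E0, E1 by auto. rewrite E00. split; ring.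
      * intros r Hr. rewrite C0. ring.
      * intros _ r Hr. rewrite C0. unfold Rdiv. ring.
    + assert (c3 : c * (p - 1) = 0).
      { destruct (Req_dec (c * (p - 1)) 0); auto. exfalso. apply C0, HC0; auto. }
      assert (cc : (1 - p) * c = 0) by lra.
      assert (Rel : a + b = p * b * (n - 2) / (2 * (n - 3))).
      { unfold K1 in Q1. destruct (Rmult_integral _ _ Q1) as [K|K]; [contradiction|].
        apply (Rmult_eq_reg_l 4); [|lra]. replace (4 * (a + b)) with (2 * p * b * (n - 2) / (n - 3)) by lra.
        field. lra. }
      assert (Kne : a + b + (1 - p) * c <> 0).
      { rewrite cc, Rplus_0_r, Rel.
        assert (p * b * (n - 2) <> 0) by (repeat apply Rmult_integral_contrapositive_currified; auto; lra).
        unfold Rdiv. apply Rmult_integral_contrapositive_currified; auto. apply Rinv_neq_0_compat. lra. }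
      apply (finish_common a b c p n hp hb X th t1 xh x1 Ph Ph1 A B t0 ka si C D
        (C / ((2 - n) * (3 - n) * (a + b + (1 - p) * c))) 0); auto.
      * intros r Hr. rewrite E0, E1 by auto. rewrite E00. split; ring.
      * intros Hn4. exfalso. apply Hn4. split; auto. split; auto.
        rewrite cc, Rplus_0_r, Rel. field. lra.
      * intros r Hr. unfold Ph. field. auto.
      * intros _ r Hr. unfold Ph1. rewrite cc, Rplus_0_r in *. rewrite Rel. field. repeat split; lra.
Qed.

Theorem theorem1 (a b c p n : R) (hn : n <> 1) (hp : p <> 0) (hb : b <> 0) :
  (* the symmetry algebra is spanned by X1, X2 and those of X3..X6 whose
     conditions hold *)
  (forall X : VF, point_symmetry a b c p n X <->
     exists k1 k2 k3 k4 k5 k6 : R,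
       (~ cond3 c p -> k3 = 0) /\ (~ cond4 a b c p n -> k4 = 0) /\
       (~ cond5 a b c p n -> k5 = 0) /\ (~ cond6 c p -> k6 = 0) /\
       vf_eq X (vf_add (vf_scale k1 X1) (vf_add (vf_scale k2 X2)
               (vf_add (vf_scale k3 (X3 b c p)) (vf_add (vf_scale k4 (X4 a b c p n))
               (vf_add (vf_scale k5 (X5 b c p)) (vf_scale k6 X6))))))) /\
  (* c <> 0, p <> 1: the algebra is 2-dimensional, spanned by X1, X2 *)
  (c <> 0 -> p <> 1 ->
     (forall X : VF, point_symmetry a b c p n X <->
        exists k1 k2 : R, vf_eq X (vf_add (vf_scale k1 X1) (vf_scale k2 X2))) /\
     (forall k1 k2 : R, vf_eq (vf_add (vf_scale k1 X1) (vf_scale k2 X2)) vf_zero ->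
        k1 = 0 /\ k2 = 0)) /\
  (* commutator table *)
  is_bracket X1 X2 X1 /\
  (cond3 c p -> is_bracket X1 (X3 b c p) vf_zero /\ is_bracket X2 (X3 b c p) vf_zero) /\
  (cond4 a b c p n ->
     is_bracket X1 (X4 a b c p n) vf_zero /\
     is_bracket X2 (X4 a b c p n) (vf_scale (2 - n) (X4 a b c p n)) /\
     is_bracket (X3 b c p) (X4 a b c p n)
       (vf_scale (p * (1 - n / 2) * b) (X4 a b c p n))) /\
  (cond5 a b c p n ->
     is_bracket X1 (X5 b c p) vf_zero /\
     is_bracket X2 (X5 b c p) (X3 b c p) /\
     is_bracket (X3 b c p) (X5 b c p) (vf_scale (p * b / 2) (X3 b c p))) /\
  (cond6 c p ->
     is_bracket X1 X6 (vf_add (vf_scale 2 X2) (vf_scale (1 / b) (X3 b c p))) /\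
     is_bracket X2 X6 X6 /\
     is_bracket (X3 b c p) X6 vf_zero /\
     (cond4 a b c p n -> is_bracket (X4 a b c p n) X6 vf_zero) /\
     (cond5 a b c p n -> is_bracket (X5 b c p) X6 vf_zero)).
Proof.
  split; [|split; [|split; [apply br12|split; [|split; [|split]]]]].
  - intros X. split; [apply forward; auto|].
    intros [k1 [k2 [k3 [k4 [k5 [k6 [C3 [C4 [C5 [C6 HX]]]]]]]]]].
    apply (backward a b c p n hb hp X k1 k2 k3 k4 k5 k6); auto.
  - intros hc hp1.
    assert (n3 : ~ cond3 c p).
    { unfold cond3. intro H. destruct (Rmult_integral _ _ H); [contradiction| apply hp1; lra]. }
    assert (n4 : ~ cond4 a b c p n) by (intros [H _]; apply n3; exact H).
    assert (n5 : ~ cond5 a b c p n) by (intros [H _]; apply n3; exact H).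
    assert (n6 : ~ cond6 c p) by (intros [H _]; contradiction).
    split; [split|].
    + intros HS. destruct (forward a b c p n X hn hp hb HS)
        as [k1 [k2 [k3 [k4 [k5 [k6 [C3 [C4 [C5 [C6 HX]]]]]]]]]].
      rewrite (C3 n3), (C4 n4), (C5 n5), (C6 n6) in HX.
      exists k1, k2. intros t r u Hr Hu. destruct (HX t r u Hr Hu) as [E1 [E2 E3]]. simpl in *.
      rewrite E1, E2, E3. split; [ring| split; ring].
    + intros [k1 [k2 HX]].
      apply (backward a b c p n hb hp X k1 k2 0 0 0 0); auto.
      intros t r u Hr Hu. destruct (HX t r u Hr Hu) as [E1 [E2 E3]]. simpl in *.
      rewrite E1, E2, E3. split; [ring| split; ring].
    + intros k1 k2 H. destruct (H 0 1 1 ltac:(lra) ltac:(lra)) as [E1 _].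
      destruct (H 1 1 1 ltac:(lra) ltac:(lra)) as [E2 _]. simpl in *. lra.
  - intros _. split; [apply br13| apply br23].
  - intros [H1 [H2 H3]]. split; [apply br14| split; [apply br24| apply br34; auto]].
  - intros _. split; [apply br15| split; [apply br25| apply br35]].
  - intros [H1 H2]. split; [apply br16; auto| split; [apply br26| split; [apply br36; auto| split]]].
    + intros _. apply br46; auto.
    + intros _. apply br56; auto.
Qed.
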